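(* Let $F(\lambda,x)=\lambda x(1-x)$ and, for $\lambda\in(0,4]$ and $x_1\in(0,1)$, let $S(\lambda,x_1)=\{x_n:n\ge1\}$ where $x_{n+1}=F(\lambda,x_n)$. (a) For $\lambda=1$ there is $\delta>0$ such that for all $x_1\in(0,\delta)$: $x_n\simeq n^{-1}$ as $n\to\infty$ and $\dim_BS(1,x_1)=\frac12$. (b) For $\lambda=3$, with $x_0=2/3$, there is $\delta>0$ such that for all $x_1$ with $0<|x_1-x_0|<\delta$: $|x_n-x_0|\simeq n^{-1/2}$ and $\dim_BS(3,x_1)=\frac23$. (c) For every $\lambda\in(0,4]\setminus\{1,3\}$ and every $x_1\in(0,1)$ such that $(x_n)$ converges, $\dim_BS(\lambda,x_1)=0$. (d) For $\lambda=1+\sqrt6$, let $A=\{a_1,a_2\}$ be the period-2 orbit of $F(1+\sqrt6,\cdot)$ (i.e. $a_1\ne a_2$, $F(a_1)=a_2$, $F(a_2)=a_1$). There is $\delta>0$ such that for all $x_1\notin A$ with $\mathrm{dist}(x_1,A)<\delta$: $\mathrm{dist}(x_n,A)\simeq n^{-1/2}$ and $\dim_BS(1+\sqrt6,x_1)=\frac23$. (e) For $\lambda=1+\sqrt8$, let $0<a_1<a_2<a_3<1$ be the points with $F(a_1)=a_2$, $F(a_2)=a_3$, $F(a_3)=a_1$ (fixed points of $F^3$). There is $\delta>0$ such that for every $x_1\in(a_1-\delta,a_1)\cup(a_2-\delta,a_2)\cup(a_3,a_3+\delta)$: $\mathrm{dist}(x_n,\{a_1,a_2,a_3\})\simeq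 n^{-1}$ and $\dim_BS(1+\sqrt8,x_1)=\frac12$. Moreover, all the sets $S(\lambda,x_1)$ in (a), (b), (d), (e) are Minkowski nondegenerate.
   Context: $\mathrm{dist}(x,A)$ is the Euclidean distance from $x$ to $A$. For sequences of positive reals, $a_n\simeq b_n$ as $n\to\infty$ means there exist constants $0<A\le B$ with $A\le a_n/b_n\le B$ for all $n$. For a bounded set $S\subset\mathbb{R}$ and $\varepsilon>0$, $S_\varepsilon=\{y: \mathrm{dist}(y,S)<\varepsilon\}$ and $|S_\varepsilon|$ is its Lebesgue measure. $\mathcal M^{*s}(S)=\limsup_{\varepsilon\to0}|S_\varepsilon|/\varepsilon^{1-s}$, $\mathcal M_*^{s}(S)=\liminf_{\varepsilon\to0}|S_\varepsilon|/\varepsilon^{1-s}$; $\overline{\dim}_BS=\inf\{s\ge0:\mathcal M^{*s}(S)=0\}$, $\underline{\dim}_BS=\inf\{s\ge0:\mathcal M_*^{s}(S)=0\}$, and $\dim_BS$ is their common value when equal. $S$ is Minkowski nondegenerate if there is $d\ge0$ with $0<\mathcal M_*^d(S)\le\mathcal M^{*d}(S)<\infty$. *)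

(* Defs.v *)
From Stdlib Require Import Reals List Classical ClassicalEpsilon.
Open Scope R_scope.

Definition F (lam x : R) : R := lam * x * (1 - x).

(* orbit lam x1 k = x_{k+1}, i.e. orbit lam x1 0 = x_1. *)
Fixpoint orbit (lam x1 : R) (k : nat) : R :=
  match k with
  | O => x1
  | S k' => F lam (orbit lam x1 k')
  end.

Definition xn (lam x1 : R) (n : nat) : R := orbit lam x1 (n - 1).

Definition Sset (lam x1 : R) : R -> Prop :=
  fun y => exists n : nat, (1 <= n)%nat /\ y = xn lam x1 n.

Definition asymp_equiv (a b : nat -> R) : Prop :=
  exists A B : R, 0 < A /\ A <= B /\
    forall n : nat, (1 <= n)%nat -> A <= a n / b n <= B.

(* S_eps = { y : dist(y,S) < eps }  (dist(y,S) < eps iff some s in S has |y-s| < eps) *)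
Definition nbhd (S : R -> Prop) (eps : R) : R -> Prop :=
  fun y => exists s, S s /\ Rabs (y - s) < eps.

(* Lebesgue measure of an open set U of R: the supremum of the total lengths
   of finite families of pairwise disjoint closed intervals contained in U. *)
Definition interval_sums (U : R -> Prop) : R -> Prop :=
  fun t => exists l : list (R * R),
    Forall (fun p => fst p <= snd p /\ forall y, fst p <= y <= snd p -> U y) l /\
    ForallOrdPairs (fun p q => snd p < fst q \/ snd q < fst p) l /\
    t = fold_right (fun p acc => (snd p - fst p) + acc) 0 l.

Definition open_measure (U : R -> Prop) : R :=
  epsilon (inhabits 0) (fun m => is_lub (interval_sums U) m).

Definition mink_ratio (S : R -> Prop) (s eps : R) : R :=
  open_measure (nbhd S eps) / Rpower eps (1 - s).

(* M^{*s}(S) = limsup_{eps->0+} ratio = 0   (ratio is nonnegative) *)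
Definition upper_mink_zero (S : R -> Prop) (s : R) : Prop :=
  forall eta, 0 < eta -> exists eps0, 0 < eps0 /\
    forall eps, 0 < eps < eps0 -> mink_ratio S s eps < eta.

(* M_*^s(S) = liminf_{eps->0+} ratio = 0 *)
Definition lower_mink_zero (S : R -> Prop) (s : R) : Prop :=
  forall eta, 0 < eta -> forall eps0, 0 < eps0 ->
    exists eps, 0 < eps < eps0 /\ mink_ratio S s eps < eta.

Definition is_inf (E : R -> Prop) (m : R) : Prop :=
  (forall x, E x -> m <= x) /\ (forall b, (forall x, E x -> b <= x) -> b <= m).

Definition upper_box_dim (S : R -> Prop) (d : R) : Prop :=
  is_inf (fun s => 0 <= s /\ upper_mink_zero S s) d.

Definition lower_box_dim (S : R -> Prop) (d : R) : Prop :=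
  is_inf (fun s => 0 <= s /\ lower_mink_zero S s) d.

Definition box_dim (S : R -> Prop) (d : R) : Prop :=
  upper_box_dim S d /\ lower_box_dim S d.

(* Minkowski nondegenerate: exists d >= 0 with 0 < M_*^d(S) <= M^{*d}(S) < oo,
   i.e. the ratio is eventually (as eps -> 0+) bounded between two positive constants. *)
Definition mink_nondegenerate (S : R -> Prop) : Prop :=
  exists d, 0 <= d /\ exists c C eps0, 0 < c /\ 0 < eps0 /\
    forall eps, 0 < eps < eps0 -> c <= mink_ratio S d eps <= C.

Definition dist2 (x a1 a2 : R) : R := Rmin (Rabs (x - a1)) (Rabs (x - a2)).
Definition dist3 (x a1 a2 a3 : R) : R :=
  Rmin (Rabs (x - a1)) (Rmin (Rabs (x - a2)) (Rabs (x - a3))).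

(* Main.v *)
Require Import Defs.
From Stdlib Require Import Reals Lra Lia List Classical ClassicalEpsilon ZArith.
Open Scope R_scope.

Definition clamp (p : R*R) (t : R) : R := Rmin (Rmax t (fst p)) (snd p) - fst p.
Definition Gf (L : list (R*R)) (t : R) : R := fold_right (fun p acc => clamp p t + acc) 0 L.
Definition tot (L : list (R*R)) : R := fold_right (fun p acc => (snd p - fst p) + acc) 0 L.
Definition okp (p : R*R) : Prop := fst p <= snd p.

Lemma clamp_mono p t1 t2 : okp p -> t1 <= t2 -> clamp p t1 <= clamp p t2.
Proof. unfold okp, clamp, Rmin, Rmax; intros; repeat destruct Rle_dec; lra. Qed.
Lemma clamp_range p t : okp p -> 0 <= clamp p t <= snd p - fst p.
Proof. unfold okp, clamp, Rmin, Rmax; intros; repeat destruct Rle_dec; lra. Qed.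
Lemma clamp_in p t : fst p <= t <= snd p -> clamp p t = t - fst p.
Proof. unfold okp, clamp, Rmin, Rmax; intros; repeat destruct Rle_dec; lra. Qed.

Lemma G_mono L t1 t2 : Forall okp L -> t1 <= t2 -> Gf L t1 <= Gf L t2.
Proof.
  induction L as [|p L IH]; simpl; intros HF Ht; [lra|].
  inversion HF; subst. pose proof (clamp_mono p t1 t2 H1 Ht). specialize (IH H2 Ht). lra.
Qed.

Lemma G_single L p t1 t2 : Forall okp L -> In p L -> t1 <= t2 ->
  clamp p t2 - clamp p t1 <= Gf L t2 - Gf L t1.
Proof.
  induction L as [|q L IH]; simpl; intros HF Hin Ht; [contradiction|].
  inversion HF; subst. destruct Hin as [<-|Hin].
  - pose proof (G_mono L t1 t2 H2 Ht). lra.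
  - pose proof (clamp_mono q t1 t2 H1 Ht). specialize (IH H2 Hin Ht). lra.
Qed.

Lemma G_range L t : Forall okp L -> 0 <= Gf L t <= tot L.
Proof.
  induction L as [|p L IH]; simpl; intros HF; [lra|].
  inversion HF; subst. pose proof (clamp_range p t H1). specialize (IH H2). lra.
Qed.

Lemma cover_lemma L : Forall okp L -> forall n (I : list (R*R)), (length I <= n)%nat -> incl I L ->
  forall a b, a <= b -> (forall y, a <= y <= b -> exists p, In p I /\ fst p < y < snd p) ->
  b - a <= Gf L b - Gf L a.
Proof.
  intros HF n. induction n as [|n IH]; intros I HI Hinc a b Hab Hcov.
  - destruct I; [|simpl in HI; lia].
    destruct (Hcov b) as [p [Hp _]]; [lra|]. contradiction.
  - destruct (Hcov b) as [p [Hp Hpb]]; [lra|].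
    assert (HpL : In p L) by (apply Hinc; auto).
    pose proof (Forall_forall okp L) as [HFa _]. specialize (HFa HF p HpL).
    destruct (Rlt_or_le (fst p) a) as [Hlt|Hle].
    + pose proof (G_single L p a b HF HpL Hab).
      rewrite (clamp_in p a) in H by lra. rewrite (clamp_in p b) in H by lra. lra.
    + destruct (in_split p I Hp) as [I1 [I2 HI12]].
      assert (Hc : fst p - a <= Gf L (fst p) - Gf L a).
      { apply (IH (I1 ++ I2)).
        - subst I. rewrite length_app in *. simpl in HI. lia.
        - intros q Hq. apply Hinc. subst I. apply in_or_app. apply in_app_or in Hq.
          destruct Hq; [left|right; right]; auto.
        - lra.
        - intros y Hy. destruct (Hcov y) as [q [Hq Hqy]]; [lra|].
          exists q. split; auto. subst I. apply in_app_or in Hq. apply in_or_app.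
          destruct Hq as [Hq|[Hq|Hq]]; auto. subst q. lra. }
      pose proof (G_single L p (fst p) b HF HpL ltac:(lra)).
      rewrite (clamp_in p (fst p)) in H by lra. rewrite (clamp_in p b) in H by lra. lra.
Qed.

Definition disj (p q : R*R) : Prop := snd p < fst q \/ snd q < fst p.

Lemma Forall_filter' {A} (P : A -> Prop) f l : Forall P l -> Forall P (filter f l).
Proof.
  induction l; simpl; intros H; auto. inversion H; subst. destruct (f a); auto.
Qed.

Lemma FOP_filter {A} (P : A -> A -> Prop) f l : ForallOrdPairs P l -> ForallOrdPairs P (filter f l).
Proof.
  induction l; simpl; intros H; auto. inversion H; subst. destruct (f a); auto.
  constructor; auto. apply Forall_filter'; auto.
Qed.

Lemma filter_length' {A} f (l : list A) : (length (filter f l) <= length l)%nat.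
Proof. induction l; simpl; auto. destruct (f a); simpl; lia. Qed.

Section DS.
Variable g : R -> R.
Hypothesis gmono : forall x y, x <= y -> g x <= g y.
Definition sumg (l : list (R*R)) : R := fold_right (fun p acc => g (snd p) - g (fst p) + acc) 0 l.

Lemma sumg_split f l : sumg l = sumg (filter f l) + sumg (filter (fun q => negb (f q)) l).
Proof. induction l; simpl; [lra|]. destruct (f a); simpl; rewrite IHl; lra. Qed.

Lemma disj_sum n : forall l, (length l <= n)%nat -> forall Lo Hi, Lo <= Hi ->
  Forall (fun p => Lo <= fst p /\ fst p <= snd p /\ snd p <= Hi) l ->
  ForallOrdPairs disj l -> sumg l <= g Hi - g Lo.
Proof.
  induction n as [|n IH]; intros l Hl Lo Hi HLH HF HD.
  - destruct l; [|simpl in Hl; lia]. simpl. pose proof (gmono _ _ HLH). lra.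
  - destruct l as [|p t]; simpl. { pose proof (gmono _ _ HLH). lra. }
    inversion HF; subst. inversion HD; subst. simpl in Hl.
    set (f := fun q : R*R => if Rlt_dec (snd q) (fst p) then true else false).
    rewrite (sumg_split f t).
    assert (Hl1 : sumg (filter f t) <= g (fst p) - g Lo).
    { apply IH. - pose proof (filter_length' f t). lia. - lra.
      - apply Forall_forall. intros q Hq. apply filter_In in Hq as [Hq Hfq].
        pose proof (proj1 (Forall_forall _ _) H2 q Hq). unfold f in Hfq.
        destruct Rlt_dec; [|discriminate]. lra.
      - apply FOP_filter; auto. }
    assert (H2' : sumg (filter (fun q => negb (f q)) t) <= g Hi - g (snd p)).
    { apply IH. - pose proof (filter_length' (fun q => negb (f q)) t). lia. - lra.
      - apply Forall_forall. intros q Hq. apply filter_In in Hq as [Hq Hfq].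
        pose proof (proj1 (Forall_forall _ _) H2 q Hq).
        pose proof (proj1 (Forall_forall _ _) H3 q Hq). unfold f in Hfq.
        destruct Rlt_dec; [discriminate|]. unfold disj in H0. lra.
      - apply FOP_filter; auto. }
    lra.
Qed.
End DS.

Definition absb (l : list (R*R)) : R := fold_right (fun p acc => Rabs (fst p) + Rabs (snd p) + acc) 0 l.
Lemma absb_in l p : In p l -> Rabs (fst p) + Rabs (snd p) <= absb l.
Proof.
  induction l as [|q l IH]; simpl; intros H; [contradiction|].
  assert (0 <= absb l).
  { clear. induction l; simpl; [lra|]. pose proof (Rabs_pos (fst a)); pose proof (Rabs_pos (snd a)); lra. }
  destruct H as [<-|H]; [lra|]. specialize (IH H).
  pose proof (Rabs_pos (fst q)); pose proof (Rabs_pos (snd q)); lra.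
Qed.

Definition covers (U : R -> Prop) (L : list (R*R)) : Prop :=
  forall y, U y -> exists p, In p L /\ fst p < y < snd p.

Lemma isums_le U L t : Forall okp L -> covers U L -> interval_sums U t -> t <= tot L.
Proof.
  intros HL Hc [l [HF [HD ->]]].
  set (M := absb l).
  assert (Hsg : tot l <= sumg (Gf L) l).
  { clear HD M. induction l as [|p l IH]; simpl; [lra|]. inversion HF; subst.
    destruct H1 as [Hp HU]. specialize (IH H2).
    pose proof (cover_lemma L HL (length L) L (le_n _) (incl_refl _) (fst p) (snd p) Hp
      (fun y Hy => Hc y (HU y Hy))). lra. }
  assert (HM : 0 <= M). { unfold M; clear. induction l; simpl; [lra|].
    pose proof (Rabs_pos (fst a)); pose proof (Rabs_pos (snd a)); lra. }
  assert (Hds : sumg (Gf L) l <= Gf L M - Gf L (- M)).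
  { apply (disj_sum (Gf L) (fun x y H => G_mono L x y HL H) (length l)); auto; [lra|].
    apply Forall_forall. intros p Hp. pose proof (absb_in l p Hp).
    pose proof (proj1 (Forall_forall _ _) HF p Hp) as [Hp1 _].
    unfold M. pose proof (Rle_abs (fst p)). pose proof (Rle_abs (snd p)).
    pose proof (Rabs_pos (fst p)); pose proof (Rabs_pos (snd p)).
    pose proof (Rabs_Ropp (fst p)). pose proof (Rle_abs (- fst p)). split; [|split]; lra.
    }
  change (tot l <= tot L). pose proof (G_range L M HL). pose proof (G_range L (-M) HL). lra.
Qed.

Lemma open_measure_lub U L : Forall okp L -> covers U L -> is_lub (interval_sums U) (open_measure U).
Proof.
  intros HL Hc. unfold open_measure. apply epsilon_spec.
  destruct (completeness (interval_sums U)) as [m Hm].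
  - exists (tot L). intros t Ht. eapply isums_le; eauto.
  - exists 0. exists nil. repeat split; auto. constructor.
  - exists m; auto.
Qed.

Lemma measure_le U L : Forall okp L -> covers U L -> open_measure U <= tot L.
Proof.
  intros HL Hc. pose proof (open_measure_lub U L HL Hc) as [_ H]. apply H.
  intros t Ht. eapply isums_le; eauto.
Qed.

Lemma measure_ge U L t : Forall okp L -> covers U L -> interval_sums U t -> t <= open_measure U.
Proof. intros HL Hc Ht. pose proof (open_measure_lub U L HL Hc) as [H _]. apply H; auto. Qed.

Lemma absle x r : Rabs x <= r -> -r <= x <= r.
Proof. unfold Rabs; destruct Rcase_abs; intros; lra. Qed.
Lemma abslt x r : Rabs x < r -> -r < x < r.
Proof. unfold Rabs; destruct Rcase_abs; intros; lra. Qed.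

Lemma RP_pos x y : 0 < Rpower x y.
Proof. unfold Rpower; apply exp_pos. Qed.

Lemma RP_ge1 x y : 0 < x < 1 -> y <= 0 -> 1 <= Rpower x y.
Proof.
  intros Hx Hy. unfold Rpower. assert (ln x < 0).
  { rewrite <- ln_1. apply ln_increasing; lra. }
  pose proof (exp_ineq1_le (y * ln x)). assert (0 <= y * ln x) by nra. lra.
Qed.

Lemma RP_small x y eta : 0 < y -> 0 < eta -> 0 < x -> x < exp (ln eta / y) -> Rpower x y < eta.
Proof.
  intros Hy He Hx Hlt. unfold Rpower.
  assert (ln x < ln eta / y).
  { rewrite <- (ln_exp (ln eta / y)). apply ln_increasing; auto. }
  rewrite <- (exp_ln eta He). apply exp_increasing.
  apply (Rmult_lt_compat_l y) in H; auto. field_simplify in H; lra.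
Qed.

Lemma RP_le_base_neg x y c : 0 < x <= y -> 0 <= c -> Rpower y (- c) <= Rpower x (- c).
Proof.
  intros Hxy Hc. rewrite !Rpower_Ropp. apply Rinv_le_contravar. apply RP_pos.
  apply Rle_Rpower_l; auto.
Qed.

Lemma RP_le_exp x u v : 0 < x <= 1 -> u <= v -> Rpower x v <= Rpower x u.
Proof.
  intros Hx Huv. unfold Rpower. destruct (Req_dec x 1) as [->|Hn].
  - rewrite ln_1. rewrite !Rmult_0_r. lra.
  - assert (ln x < 0). { rewrite <- ln_1. apply ln_increasing; lra. }
    destruct (Req_dec u v) as [->|]; [lra|]. left. apply exp_increasing. nra.
Qed.

Lemma ratio_shift S d s eps : 0 < eps ->
  mink_ratio S s eps = mink_ratio S d eps * Rpower eps (s - d).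
Proof.
  intros He. unfold mink_ratio.
  replace (1 - d) with ((1 - s) + (s - d)) by ring. rewrite Rpower_plus.
  pose proof (RP_pos eps (1-s)). pose proof (RP_pos eps (s-d)). field. lra.
Qed.

Lemma upper_to_lower S s : upper_mink_zero S s -> lower_mink_zero S s.
Proof.
  intros H eta Heta eps0 Heps0. destruct (H eta Heta) as [e1 [He1 Hr]].
  exists (Rmin eps0 e1 / 2). unfold Rmin; destruct Rle_dec; split; [split| |split|]; try lra;
  apply Hr; lra.
Qed.

Lemma dim_of_bounds S d c C e0 : 0 <= d -> 0 < c -> 0 < e0 ->
  (forall eps, 0 < eps < e0 -> c <= mink_ratio S d eps <= C) ->
  box_dim S d /\ mink_nondegenerate S.
Proof.
  intros Hd Hc He0 Hb.
  assert (HC : 0 < C). { destruct (Hb (e0/2)) as [H1 H2]; lra. }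
  assert (Hup : forall s, d < s -> upper_mink_zero S s).
  { intros s Hs eta Heta.
    set (e1 := Rmin (Rmin e0 1) (exp (ln (eta / C) / (s - d)))).
    assert (He1 : 0 < e1). { unfold e1, Rmin. pose proof (exp_pos (ln (eta / C) / (s - d))).
      repeat destruct Rle_dec; lra. }
    exists e1. split; auto. intros eps [Heps Heps1].
    assert (Heps2 : eps < e0 /\ eps < exp (ln (eta / C) / (s - d))).
    { unfold e1, Rmin in Heps1. repeat destruct Rle_dec; lra. }
    rewrite (ratio_shift S d s eps Heps).
    destruct (Hb eps) as [_ H2]; [lra|].
    assert (Rpower eps (s - d) < eta / C).
    { apply RP_small; try lra. apply Rdiv_lt_0_compat; lra. }
    pose proof (RP_pos eps (s-d)).
    apply Rle_lt_trans with (C * Rpower eps (s - d)). apply Rmult_le_compat_r; lra.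
    apply (Rmult_lt_compat_l C) in H; auto. replace (C * (eta / C)) with eta in H by (field; lra). lra. }
  assert (Hnlow : forall s, s <= d -> ~ lower_mink_zero S s).
  { intros s Hs Hl. destruct (Hl c Hc (Rmin e0 1)) as [eps [[Heps Heps1] Hr]].
    { unfold Rmin; destruct Rle_dec; lra. }
    assert (Heps2 : eps < e0 /\ eps < 1) by (unfold Rmin in Heps1; destruct Rle_dec; lra).
    rewrite (ratio_shift S d s eps Heps) in Hr.
    destruct (Hb eps) as [H1 _]; [lra|].
    pose proof (RP_ge1 eps (s - d) ltac:(lra) ltac:(lra)).
    assert (c * 1 <= mink_ratio S d eps * Rpower eps (s - d)).
    { apply Rmult_le_compat; lra. } lra. }
  split; [split|].
  - split.
    + intros s [Hs Hu]. destruct (Rle_or_lt d s); auto.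
      exfalso. apply (Hnlow s); [lra|]. apply upper_to_lower; auto.
    + intros b Hbd. destruct (Rle_or_lt b d); auto.
      assert (b <= (d + b) / 2). { apply Hbd. split; [lra|]. apply Hup. lra. } lra.
  - split.
    + intros s [Hs Hu]. destruct (Rle_or_lt d s); auto.
      exfalso. apply (Hnlow s); [lra|]. auto.
    + intros b Hbd. destruct (Rle_or_lt b d); auto.
      assert (b <= (d + b) / 2). { apply Hbd. split; [lra|]. apply upper_to_lower, Hup. lra. } lra.
  - exists d. split; auto. exists c, C, e0. split; auto.
Qed.

Lemma dim0 S : (forall s, 0 < s -> upper_mink_zero S s) -> box_dim S 0.
Proof.
  intros H. split; split.
  - intros s [Hs _]; auto.
  - intros b Hb. destruct (Rle_or_lt b 0); auto.
    assert (b <= b / 2) by (apply Hb; split; [lra|]; apply H; lra). lra.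
  - intros s [Hs _]; auto.
  - intros b Hb. destruct (Rle_or_lt b 0); auto.
    assert (b <= b / 2) by (apply Hb; split; [lra|]; apply upper_to_lower, H; lra). lra.
Qed.

Lemma floor_nat X : 0 <= X -> exists K : nat, INR K <= X < INR K + 1.
Proof.
  intros HX. destruct (archimed X) as [H1 H2].
  assert (Hz : (0 < up X)%Z). { apply lt_IZR. lra. }
  exists (Z.to_nat (up X - 1)). rewrite INR_IZR_INZ. rewrite Z2Nat.id by lia.
  rewrite minus_IZR. simpl. lra.
Qed.

Lemma ceil_nat X : 0 <= X -> exists N : nat, X <= INR N <= X + 1 /\ (1 <= N)%nat.
Proof.
  intros HX. destruct (floor_nat X HX) as [K HK]. exists (S K). rewrite S_INR. split; [lra|lia].
Qed.

Definition cov_list (lam x1 : R) (P : list R) (N : nat) (r eps : R) : list (R*R) :=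
  map (fun n => (xn lam x1 n - eps, xn lam x1 n + eps)) (seq 0 N) ++
  map (fun p => (p - r - eps, p + r + eps)) P.

Lemma tot_app l1 l2 : tot (l1 ++ l2) = tot l1 + tot l2.
Proof. induction l1; simpl; [lra|]. rewrite IHl1; lra. Qed.

Lemma tot_map_const {A} (f g : A -> R) w (l : list A) : (forall x, g x - f x = w) ->
  tot (map (fun x => (f x, g x)) l) = INR (length l) * w.
Proof.
  intros H. induction l; simpl; [lra|]. rewrite IHl, H. destruct (length l); simpl; lra.
Qed.

Lemma cov_ok lam x1 P N r eps : 0 <= r -> 0 < eps -> Forall okp (cov_list lam x1 P N r eps).
Proof.
  intros Hr He. apply Forall_forall. intros q Hq. unfold cov_list in Hq.
  apply in_app_or in Hq. unfold okp.
  destruct Hq as [Hq|Hq]; apply in_map_iff in Hq as [z [<- _]]; simpl; lra.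
Qed.

Lemma cov_covers lam x1 P N r eps : 0 <= r ->
  (forall n, (N <= n)%nat -> exists p, In p P /\ Rabs (xn lam x1 n - p) <= r) ->
  covers (nbhd (Sset lam x1) eps) (cov_list lam x1 P N r eps).
Proof.
  intros Hr HP y [s [[n [Hn ->]] Hys]]. unfold cov_list.
  destruct (Nat.lt_ge_cases n N) as [Hlt|Hge].
  - exists (xn lam x1 n - eps, xn lam x1 n + eps). split.
    + apply in_or_app. left. apply in_map_iff. exists n. split; auto. apply in_seq. lia.
    + simpl. apply Rabs_def2 in Hys. lra.
  - destruct (HP n Hge) as [p [Hp Hnp]]. exists (p - r - eps, p + r + eps). split.
    + apply in_or_app. right. apply in_map_iff. exists p; auto.
    + simpl. apply Rabs_def2 in Hys. apply absle in Hnp. lra.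
Qed.

Lemma nbhd_upper lam x1 P N r eps : 0 <= r -> 0 < eps ->
  (forall n, (N <= n)%nat -> exists p, In p P /\ Rabs (xn lam x1 n - p) <= r) ->
  open_measure (nbhd (Sset lam x1) eps) <= 2 * eps * INR N + INR (length P) * (2 * r + 2 * eps).
Proof.
  intros Hr He HP. apply Rle_trans with (tot (cov_list lam x1 P N r eps)).
  apply measure_le; [apply cov_ok; auto| apply cov_covers; eauto].
  unfold cov_list. rewrite tot_app.
  rewrite (tot_map_const (fun n => xn lam x1 n - eps) (fun n => xn lam x1 n + eps) (2*eps)) by (intros; ring).
  rewrite (tot_map_const (fun p => p - r - eps) (fun p => p + r + eps) (2*r + 2*eps)) by (intros; ring).
  rewrite length_seq. lra.
Qed.

Lemma FOP_map_seq {A} (R0 : A -> A -> Prop) (f : nat -> A) K : forall a,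
  (forall j k, (a <= j < k)%nat -> (k < a + K)%nat -> R0 (f j) (f k)) ->
  ForallOrdPairs R0 (map f (seq a K)).
Proof.
  induction K as [|K IH]; intros a H; simpl; constructor.
  - apply Forall_forall. intros q Hq. apply in_map_iff in Hq as [k [<- Hk]].
    apply in_seq in Hk. apply H; lia.
  - apply IH. intros j k Hj Hk. apply H; lia.
Qed.

Lemma nbhd_lower lam x1 (e : nat -> R) K eps L : 0 < eps -> Forall okp L ->
  covers (nbhd (Sset lam x1) eps) L ->
  (forall k, Sset lam x1 (e k)) ->
  (forall j k, (j < k < K)%nat -> eps < Rabs (e j - e k)) ->
  INR K * eps <= open_measure (nbhd (Sset lam x1) eps).
Proof.
  intros He HL Hc HS Hsep. apply (measure_ge _ L); auto.
  exists (map (fun k => (e k - eps/2, e k + eps/2)) (seq 0 K)). split; [|split].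
  - apply Forall_forall. intros q Hq. apply in_map_iff in Hq as [k [<- _]]. simpl.
    split; [lra|]. intros y Hy. exists (e k). split; auto. apply Rabs_def1; lra.
  - apply FOP_map_seq. intros j k Hj Hk. simpl. pose proof (Hsep j k ltac:(lia)).
    unfold disj; simpl. destruct (Rle_or_lt 0 (e j - e k)).
    + rewrite Rabs_right in H by lra. right; lra.
    + rewrite Rabs_left in H by lra. left; lra.
  - change (INR K * eps = tot (map (fun k => (e k - eps/2, e k + eps/2)) (seq 0 K))).
    rewrite (tot_map_const (fun k => e k - eps/2) (fun k => e k + eps/2) eps (seq 0 K))
      by (intros; field). rewrite length_seq. reflexivity.
Qed.

Lemma RP_inv x y : 0 < x -> Rpower (/ x) y = Rpower x (- y).
Proof. intros Hx. unfold Rpower. rewrite ln_Rinv by auto. f_equal; ring. Qed.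

Lemma RP_eps_mul x u : 0 < x -> x * Rpower x u = Rpower x (1 + u).
Proof. intros Hx. rewrite Rpower_plus, Rpower_1; auto. Qed.

Lemma tele (e : nat -> R) s : (forall k, 0 <= s * (e k - e (S k))) ->
  forall j m, s * (e j - e (S j)) <= s * (e j - e (S (j + m))).
Proof.
  intros H j m. induction m as [|m IH].
  - rewrite Nat.add_0_r. lra.
  - replace (S (j + S m)) with (S (S (j + m))) by lia.
    specialize (H (S (j + m))). lra.
Qed.

Lemma gen_box lam x1 (P : list R) a B G (e : nat -> R) s :
  0 < a -> 0 < B -> 0 < G -> s * s = 1 ->
  (forall n, (1 <= n)%nat -> exists p, In p P /\ Rabs (xn lam x1 n - p) <= B * Rpower (INR n) (- a)) ->
  (forall k, Sset lam x1 (e k)) ->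
  (forall k, G * Rpower (INR (S k)) (- (1 + a)) <= s * (e k - e (S k))) ->
  box_dim (Sset lam x1) (1 / (1 + a)) /\ mink_nondegenerate (Sset lam x1).
Proof.
  intros Ha HB HG Hs HU HS Hgap.
  set (d := 1 / (1 + a)).
  assert (Hd : 0 < d < 1). { unfold d. split. apply Rdiv_lt_0_compat; lra.
    apply (Rmult_lt_reg_r (1 + a)); [lra|]. field_simplify; lra. }
  assert (Hda : d * (1 + a) = 1) by (unfold d; field; lra).
  set (e0 := Rmin 1 (G / (2 * Rpower 2 (1 / d)))).
  assert (He0 : 0 < e0). { unfold e0, Rmin. pose proof (RP_pos 2 (1/d)).
    destruct Rle_dec; [lra|]. apply Rdiv_lt_0_compat; lra. }
  set (L := INR (length P)).
  assert (HL : 0 <= L) by apply pos_INR.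
  apply (dim_of_bounds _ d ((1/2) * Rpower (G / 2) d) (4 + L * (2 * B + 2)) e0); [lra| |auto|].
  { pose proof (RP_pos (G/2) d); lra. }
  intros eps [Heps Heps0].
  assert (Heps1 : eps < 1 /\ eps < G / (2 * Rpower 2 (1 / d))).
  { unfold e0, Rmin in Heps0. destruct Rle_dec; lra. }
  pose proof (RP_pos eps (1 - d)) as Hpe.
  unfold mink_ratio. split.
  -
    set (X := Rpower (G / (2 * eps)) d).
    assert (HX2 : 2 <= X).
    { unfold X. replace 2 with (Rpower (Rpower 2 (1/d)) d) at 1.
      2:{ rewrite Rpower_mult. replace (1 / d * d) with 1 by (field; lra). apply Rpower_1; lra. }
      apply Rle_Rpower_l; [lra|]. split. apply RP_pos.
      pose proof (RP_pos 2 (1/d)).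
      apply (Rmult_le_reg_r (2 * eps)); [lra|]. field_simplify; [|lra].
      destruct Heps1 as [_ H2]. apply (Rmult_lt_compat_r (2 * Rpower 2 (1/d))) in H2; [|lra].
      field_simplify in H2; lra. }
    destruct (floor_nat X) as [K [HK1 HK2]]; [lra|].
    assert (HKpos : 1 <= INR K) by lra.
    assert (Hsep : forall j k, (j < k < K)%nat -> eps < Rabs (e j - e k)).
    { intros j k Hjk.
      assert (Hnn : forall k, 0 <= s * (e k - e (S k))).
      { intros k0. pose proof (Hgap k0). pose proof (RP_pos (INR (S k0)) (-(1+a))).
        assert (0 <= G * Rpower (INR (S k0)) (- (1 + a))) by (apply Rmult_le_pos; lra). lra. }
      pose proof (tele e s Hnn j (k - S j)) as Ht.
      replace (S (j + (k - S j))) with k in Ht by lia.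
      pose proof (Hgap j) as Hg.
      assert (HjK : INR (S j) <= INR K) by (apply le_INR; lia).
      assert (Hlow : 2 * eps <= G * Rpower (INR (S j)) (- (1 + a))).
      { apply Rle_trans with (G * Rpower X (- (1 + a))).
        - unfold X. rewrite Rpower_mult. replace (d * - (1 + a)) with (- (1)) by nra.
          rewrite Rpower_Ropp, Rpower_1. field_simplify; lra.
          apply Rdiv_lt_0_compat; lra.
        - apply Rmult_le_compat_l; [lra|]. apply RP_le_base_neg; [|lra].
          split; [rewrite S_INR; pose proof (pos_INR j); lra|lra]. }
      assert (Habs : s * (e j - e k) <= Rabs (e j - e k)).
      { assert (s = 1 \/ s = -1) as [->| ->] by nra; unfold Rabs; destruct Rcase_abs; lra. }
      lra. }
    pose proof (nbhd_lower lam x1 e K eps (cov_list lam x1 P 1 B eps) Heps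
      (cov_ok lam x1 P 1 B eps ltac:(lra) Heps)) as Hlow.
    assert (Hm : INR K * eps <= open_measure (nbhd (Sset lam x1) eps)).
    { apply Hlow; auto. apply cov_covers; [lra|]. intros n Hn.
      destruct (HU n Hn) as [p [Hp Hnp]]. exists p. split; auto.
      assert (Rpower (INR n) (-a) <= 1).
      { rewrite Rpower_Ropp. assert (1 <= INR n) by (apply (le_INR 1); auto).
        assert (1 <= Rpower (INR n) a).
        { rewrite <- (Rpower_O (INR n)) by lra. apply Rle_Rpower; lra. }
        rewrite <- Rinv_1. apply Rinv_le_contravar; lra. }
      pose proof (RP_pos (INR n) (-a)). nra. }
    apply (Rmult_le_reg_r (Rpower eps (1 - d))); auto.
    assert (Hq : forall m, m / Rpower eps (1-d) * Rpower eps (1-d) = m) by (intros; field; lra).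
    rewrite Hq. apply Rle_trans with (INR K * eps); auto.
    apply Rle_trans with ((X / 2) * eps); [|apply Rmult_le_compat_r; lra].
    assert (Xeq : X = Rpower (G / 2) d * Rpower eps (- d)).
    { unfold X. replace (G / (2 * eps)) with ((G / 2) * / eps) by (field; lra).
      rewrite <- Rpower_mult_distr; [|lra|apply Rinv_0_lt_compat; lra].
      rewrite RP_inv by lra. reflexivity. }
    rewrite Xeq. replace (1 - d) with (1 + - d) by ring. rewrite <- RP_eps_mul by lra.
    right. field.
  -
    set (T := Rpower eps (- d)).
    assert (HT1 : 1 <= T) by (apply RP_ge1; lra).
    destruct (ceil_nat T) as [N [[HN1 HN2] HN]]; [lra|].
    assert (HeT : eps * T = Rpower eps (1 - d)).
    { unfold T. rewrite RP_eps_mul by lra. f_equal; ring. }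
    assert (Hee : eps <= Rpower eps (1 - d)).
    { rewrite <- (Rpower_1 eps) at 1 by lra. apply RP_le_exp; lra. }
    assert (Hub := nbhd_upper lam x1 P N (B * Rpower eps (1 - d)) eps).
    assert (Hm : open_measure (nbhd (Sset lam x1) eps) <=
               2 * eps * INR N + L * (2 * (B * Rpower eps (1 - d)) + 2 * eps)).
    { apply Hub; [apply Rmult_le_pos; lra|lra|].
      intros n Hn. destruct (HU n ltac:(lia)) as [p [Hp Hnp]]. exists p. split; auto.
      eapply Rle_trans; [apply Hnp|]. apply Rmult_le_compat_l; [lra|].
      apply Rle_trans with (Rpower T (- a)).
      - apply RP_le_base_neg; [|lra]. split; [lra|].
        apply Rle_trans with (INR N); auto. apply le_INR; auto.
      - unfold T. rewrite Rpower_mult. right. f_equal.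
        apply (Rmult_eq_reg_r (1 + a)); [|lra]. replace (- d * - a * (1 + a)) with (a * (d * (1 + a))) by ring.
        rewrite Hda. unfold d. field. lra. }
    apply (Rmult_le_reg_r (Rpower eps (1 - d))); auto.
    assert (Hq : forall m, m / Rpower eps (1-d) * Rpower eps (1-d) = m) by (intros; field; lra).
    rewrite Hq. eapply Rle_trans; [apply Hm|].
    assert (2 * eps * INR N <= 4 * Rpower eps (1 - d)).
    { rewrite <- HeT. assert (INR N <= 2 * T) by lra. nra. }
    assert (L * (2 * (B * Rpower eps (1 - d)) + 2 * eps) <= L * (2 * B + 2) * Rpower eps (1 - d)).
    { rewrite Rmult_assoc. apply Rmult_le_compat_l; auto. nra. }
    lra.
Qed.

Lemma nf1 (h : R -> R) K M r : 0 < K -> 0 <= M -> 0 < r ->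
  (forall u, 0 < u <= r -> Rabs (h u - (u - K * u^2)) <= M * u^3) ->
  exists r0, 0 < r0 /\ forall w : nat -> R, 0 < w 0%nat <= r0 -> (forall k, w (S k) = h (w k)) ->
  forall k, (0 < w k <= r0) /\ K / 2 * (w k)^2 <= w k - w (S k) /\
     / w 0%nat + INR k * (K / 2) <= / w k <= / w 0%nat + INR k * (3 * K).
Proof.
  intros HK HM Hr Hh.
  set (r0 := Rmin r (Rmin (K / (2 * (M + 1))) (1 / (4 * K)))).
  assert (Hr0 : 0 < r0 /\ r0 <= r /\ M * r0 <= K / 2 /\ K * r0 <= 1/4).
  { unfold r0. assert (0 < K / (2 * (M + 1))) by (apply Rdiv_lt_0_compat; lra).
    assert (0 < 1 / (4 * K)) by (apply Rdiv_lt_0_compat; lra).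
    assert (M * (K / (2 * (M + 1))) <= K / 2).
    { apply (Rmult_le_reg_r (2 * (M + 1))); [lra|]. field_simplify; nra. }
    assert (K * (1 / (4 * K)) = 1/4) by (field; lra).
    unfold Rmin; repeat destruct Rle_dec; repeat split; try lra; nra. }
  destruct Hr0 as [Hr0 [Hr0r [HMr HKr]]].
  exists r0. split; auto. intros w Hw0 Hrec.
  assert (Hstep : forall v, 0 < v <= r0 -> 0 < h v < v /\ h v <= r0 /\ K / 2 * v^2 <= v - h v /\
            / v + K / 2 <= / h v <= / v + 3 * K).
  { intros v Hv. pose proof (Hh v ltac:(lra)) as Hb. apply absle in Hb.
    set (t := (v - h v) / v).
    assert (Hhv : h v = v * (1 - t)) by (unfold t; field; lra).
    assert (Ht : K * v / 2 <= t <= 3 * K * v / 2).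
    { unfold t. split; apply (Rmult_le_reg_r v); try lra; field_simplify; try lra;
      assert (M * v^3 <= K / 2 * v^2) by (replace (M * v^3) with ((M * v) * v^2) by ring;
        apply Rmult_le_compat_r; [nra| nra]); nra. }
    assert (Ht1 : t <= 3/8) by nra. assert (Ht0 : 0 < t) by nra.
    rewrite Hhv. repeat split; try nra.
    - replace (/ (v * (1 - t))) with (/ v * / (1 - t)) by (field; lra).
      assert (1 + t <= / (1 - t)). { apply (Rmult_le_reg_r (1 - t)); [lra|]. field_simplify; nra. }
      assert (/ v * (K * v / 2) = K / 2) by (field; lra).
      pose proof (Rinv_0_lt_compat v ltac:(lra)). nra.
    - replace (/ (v * (1 - t))) with (/ v * / (1 - t)) by (field; lra).
      assert (/ (1 - t) <= 1 + 2 * t). { apply (Rmult_le_reg_r (1 - t)); [lra|]. field_simplify; nra. }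
      assert (/ v * (3 * K * v / 2) = 3 * K / 2) by (field; lra).
      pose proof (Rinv_0_lt_compat v ltac:(lra)). nra. }
  intros k. induction k as [|k IH].
  - simpl. rewrite Hrec. destruct (Hstep (w 0%nat) Hw0) as [H1 [H2 [H3 H4]]]. repeat split; lra.
  - destruct IH as [Hk [Hg Hi]]. rewrite (Hrec (S k)), (Hrec k).
    rewrite (Hrec k) in Hg. destruct (Hstep (w k) Hk) as [H1 [H2 [H3 H4]]].
    destruct (Hstep (h (w k)) ltac:(lra)) as [H5 [H6 [H7 H8]]].
    rewrite S_INR. repeat split; try lra.
Qed.

Lemma nf2 (h : R -> R) K M r : 0 < K -> 0 <= M -> 0 < r ->
  (forall u, 0 < u <= r -> Rabs (h u - (u - K * u^3)) <= M * u^4) ->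
  exists r0, 0 < r0 /\ forall w : nat -> R, 0 < w 0%nat <= r0 -> (forall k, w (S k) = h (w k)) ->
  forall k, (0 < w k <= r0) /\ K / 2 * (w k)^3 <= w k - w (S k) /\
     / (w 0%nat)^2 + INR k * K <= / (w k)^2 <= / (w 0%nat)^2 + INR k * (9 * K).
Proof.
  intros HK HM Hr Hh.
  set (r0 := Rmin r (Rmin (K / (2 * (M + 1))) (Rmin (1 / 6) (1 / (6 * K))))).
  assert (Hr0 : 0 < r0 /\ r0 <= r /\ M * r0 <= K / 2 /\ K * r0 <= 1/6 /\ r0 <= 1/6).
  { unfold r0. assert (0 < K / (2 * (M + 1))) by (apply Rdiv_lt_0_compat; lra).
    assert (0 < 1 / (6 * K)) by (apply Rdiv_lt_0_compat; lra).
    assert (M * (K / (2 * (M + 1))) <= K / 2).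
    { apply (Rmult_le_reg_r (2 * (M + 1))); [lra|]. field_simplify; nra. }
    assert (K * (1 / (6 * K)) = 1/6) by (field; lra).
    pose proof (Rmin_l r (Rmin (K / (2 * (M + 1))) (Rmin (1 / 6) (1 / (6 * K))))).
    pose proof (Rmin_r r (Rmin (K / (2 * (M + 1))) (Rmin (1 / 6) (1 / (6 * K))))).
    pose proof (Rmin_l (K / (2 * (M + 1))) (Rmin (1 / 6) (1 / (6 * K)))).
    pose proof (Rmin_r (K / (2 * (M + 1))) (Rmin (1 / 6) (1 / (6 * K)))).
    pose proof (Rmin_l (1 / 6) (1 / (6 * K))). pose proof (Rmin_r (1 / 6) (1 / (6 * K))).
    assert (0 < Rmin r (Rmin (K / (2 * (M + 1))) (Rmin (1 / 6) (1 / (6 * K))))).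
    { unfold Rmin; repeat destruct Rle_dec; lra. }
    repeat split; try lra.
    - apply Rle_trans with (M * (K / (2 * (M + 1)))); auto. apply Rmult_le_compat_l; lra.
    - apply Rle_trans with (K * (1 / (6 * K))); [|lra]. apply Rmult_le_compat_l; lra. }
  destruct Hr0 as [Hr0 [Hr0r [HMr [HKr Hr16]]]].
  exists r0. split; auto. intros w Hw0 Hrec.
  assert (Hstep : forall v, 0 < v <= r0 -> 0 < h v < v /\ h v <= r0 /\ K / 2 * v^3 <= v - h v /\
            / v^2 + K <= / (h v)^2 <= / v^2 + 9 * K).
  { intros v Hv. pose proof (Hh v ltac:(lra)) as Hb. apply absle in Hb.
    set (t := (v - h v) / v).
    assert (Hhv : h v = v * (1 - t)) by (unfold t; field; lra).
    assert (HKv : K * v^2 <= 1/36) by nra.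
    assert (Ht : K * v^2 / 2 <= t <= 3 * K * v^2 / 2).
    { unfold t. split; apply (Rmult_le_reg_r v); try lra; field_simplify; try lra;
      assert (M * v^4 <= K / 2 * v^3) by (replace (M * v^4) with ((M * v) * v^3) by ring;
        apply Rmult_le_compat_r; [nra| nra]); nra. }
    assert (0 < K * v^2) by (apply Rmult_lt_0_compat; nra).
    assert (Ht1 : t <= 1/24) by lra. assert (Ht0 : 0 < t) by lra.
    rewrite Hhv. repeat split; try nra.
    - replace (/ (v * (1 - t))^2) with (/ v^2 * / (1 - t)^2) by (field; lra).
      assert (1 + 2 * t <= / (1 - t)^2). { apply (Rmult_le_reg_r ((1 - t)^2)); [nra|]. field_simplify; nra. }
      assert (/ v^2 * (K * v^2) = K) by (field; lra).
      assert (0 < / v^2) by (apply Rinv_0_lt_compat; nra). nra.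
    - replace (/ (v * (1 - t))^2) with (/ v^2 * / (1 - t)^2) by (field; lra).
      assert (/ (1 - t)^2 <= 1 + 6 * t). { apply (Rmult_le_reg_r ((1 - t)^2)); [nra|]. field_simplify; nra. }
      assert (/ v^2 * (3 * K * v^2 / 2) = 3 * K / 2) by (field; lra).
      assert (0 < / v^2) by (apply Rinv_0_lt_compat; nra). nra. }
  intros k. induction k as [|k IH].
  - simpl. rewrite Hrec. destruct (Hstep (w 0%nat) Hw0) as [H1 [H2 [H3 H4]]]. repeat split; lra.
  - destruct IH as [Hk [Hg Hi]]. rewrite (Hrec (S k)), (Hrec k).
    rewrite (Hrec k) in Hg. destruct (Hstep (w k) Hk) as [H1 [H2 [H3 H4]]].
    destruct (Hstep (h (w k)) ltac:(lra)) as [H5 [H6 [H7 H8]]].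
    rewrite S_INR. repeat split; try lra.
Qed.

Lemma pow_le1 x n : 0 <= x <= 1 -> x ^ n <= 1.
Proof. intros H. induction n; simpl; [lra|]. pose proof (pow_le x n ltac:(lra)). nra. Qed.

Lemma fin_bounds (u : nat -> R) : (forall n, (1 <= n)%nat -> 0 < u n) ->
  forall N, exists A B, 0 < A /\ A <= B /\ forall n, (1 <= n < N)%nat -> A <= u n * INR n <= B.
Proof.
  intros Hp N. induction N as [|N [A [B [HA [HAB H]]]]].
  - exists 1, 1. repeat split; try lra; intros; lia.
  - destruct (Nat.eq_dec N 0) as [->|HN].
    + exists 1, 1. repeat split; try lra; intros; lia.
    + assert (Hv : 0 < u N * INR N).
      { apply Rmult_lt_0_compat. apply Hp; lia. apply lt_0_INR; lia. }
      exists (Rmin A (u N * INR N)), (Rmax B (u N * INR N)).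
      split; [unfold Rmin; destruct Rle_dec; lra|]. split.
      { unfold Rmin, Rmax; repeat destruct Rle_dec; lra. }
      intros n Hn. destruct (Nat.eq_dec n N) as [->|Hne].
      * unfold Rmin, Rmax; repeat destruct Rle_dec; lra.
      * specialize (H n ltac:(lia)). unfold Rmin, Rmax; repeat destruct Rle_dec; lra.
Qed.

Lemma gen_asym (u : nat -> R) n0 q Z al be L1 L2 :
  (1 <= n0)%nat -> (1 <= q)%nat -> 0 < Z -> 0 < al -> 0 < be -> 0 < L1 -> 0 < L2 ->
  (forall n, (1 <= n)%nat -> 0 < u n) ->
  (forall n, (1 <= n)%nat -> L1 * u n <= u (S n) <= L2 * u n) ->
  (forall k, Z + INR k * al <= / u (n0 + q * k)%nat <= Z + INR k * be) ->
  exists A B, 0 < A /\ A <= B /\ forall n, (1 <= n)%nat -> A <= u n * INR n <= B.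
Proof.
  intros Hn0 Hq HZ Hal Hbe HL1 HL2 Hp Hc Hs.
  set (mn := Rmin 1 L1). set (Mx := Rmax 1 L2).
  assert (Hmn : 0 < mn <= 1 /\ mn <= L1) by (unfold mn, Rmin; destruct Rle_dec; lra).
  assert (HMx : 1 <= Mx /\ L2 <= Mx) by (unfold Mx, Rmax; destruct Rle_dec; lra).
  assert (P2 : forall b, (1 <= b)%nat -> forall r, mn^r * u b <= u (b + r)%nat <= Mx^r * u b).
  { intros b Hb r. induction r as [|r IH]; simpl.
    - rewrite Nat.add_0_r. lra.
    - rewrite Nat.add_succ_r. pose proof (Hc (b + r)%nat ltac:(lia)) as [H1 H2].
      pose proof (Hp (b + r)%nat ltac:(lia)). pose proof (Hp b Hb).
      assert (0 < mn ^ r) by (apply pow_lt; lra).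
      split.
      + apply Rle_trans with (mn * u (b + r)%nat). { rewrite Rmult_assoc. apply Rmult_le_compat_l; lra. }
        apply Rle_trans with (L1 * u (b + r)%nat); auto. apply Rmult_le_compat_r; lra.
      + apply Rle_trans with (Mx * u (b + r)%nat).
        { apply Rle_trans with (L2 * u (b + r)%nat); auto. apply Rmult_le_compat_r; lra. }
        rewrite Rmult_assoc. apply Rmult_le_compat_l; lra. }
  assert (Hpowm : forall r, (r <= q)%nat -> mn^q <= mn^r).
  { intros r Hr. replace q with (r + (q - r))%nat by lia. rewrite pow_add.
    assert (0 <= mn^r) by (apply pow_le; lra). assert (mn^(q-r) <= 1) by (apply pow_le1; lra).
    assert (0 <= mn^(q-r)) by (apply pow_le; lra). nra. }
  assert (HpowM : forall r, (r <= q)%nat -> Mx^r <= Mx^q).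
  { intros r Hr. replace q with (r + (q - r))%nat by lia. rewrite pow_add.
    assert (1 <= Mx^r) by (apply pow_R1_Rle; lra). assert (1 <= Mx^(q-r)) by (apply pow_R1_Rle; lra). nra. }
  set (m0 := Rmin Z al). set (M0 := Rmax Z be).
  assert (Hm0 : 0 < m0 <= Z /\ m0 <= al) by (unfold m0, Rmin; destruct Rle_dec; lra).
  assert (HM0 : Z <= M0 /\ be <= M0) by (unfold M0, Rmax; destruct Rle_dec; lra).
  assert (Hmq : 0 < mn^q) by (apply pow_lt; lra).
  assert (HMq : 1 <= Mx^q) by (apply pow_R1_Rle; lra).
  assert (Hbig : forall n, (n0 <= n)%nat -> mn^q / M0 <= u n * INR n <= Mx^q * (INR n0 + INR q) / m0).
  { intros n Hn.
    set (k := ((n - n0) / q)%nat). set (r := ((n - n0) mod q)%nat).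
    assert (Hdm : (n - n0 = q * k + r)%nat) by (unfold k, r; apply Nat.div_mod; lia).
    assert (Hr : (r < q)%nat) by (unfold r; apply Nat.mod_upper_bound; lia).
    assert (Hn' : n = ((n0 + q * k) + r)%nat) by lia.
    pose proof (P2 (n0 + q * k)%nat ltac:(lia) r) as [H1 H2]. rewrite <- Hn' in H1, H2.
    pose proof (Hs k) as [Hs1 Hs2].
    pose proof (Hp (n0 + q * k)%nat ltac:(lia)) as Hb.
    set (b := u (n0 + q * k)%nat) in *.
    assert (HINRn : INR n = INR n0 + INR q * INR k + INR r).
    { rewrite Hn'. rewrite !plus_INR, mult_INR. ring. }
    assert (HINRr : INR r + 1 <= INR q) by (rewrite <- S_INR; apply le_INR; lia).
    assert (HINRq : 1 <= INR q) by (apply (le_INR 1); lia).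
    assert (HINRn0 : 1 <= INR n0) by (apply (le_INR 1); lia).
    pose proof (pos_INR k). pose proof (pos_INR r).
    assert (Hmr := Hpowm r ltac:(lia)). assert (HMr := HpowM r ltac:(lia)).
    assert (INR k * be <= INR k * M0) by (apply Rmult_le_compat_l; lra).
    assert (INR k * m0 <= INR k * al) by (apply Rmult_le_compat_l; lra).
    assert (Hkb : / b <= M0 * (INR k + 1)) by nra.
    assert (Hka : m0 * (INR k + 1) <= / b) by nra.
    assert (Hb1 : 1 <= b * (M0 * (INR k + 1))).
    { assert (b * / b = 1) by (field; lra). apply Rle_trans with (b * / b); [lra|]. apply Rmult_le_compat_l; lra. }
    assert (Hb2 : b * (m0 * (INR k + 1)) <= 1).
    { assert (b * / b = 1) by (field; lra). apply Rle_trans with (b * / b); [|lra]. apply Rmult_le_compat_l; lra. }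
    split.
    - apply (Rmult_le_reg_r M0); [lra|]. field_simplify; [|lra].
      assert (mn^q * b <= u n) by nra.
      assert (INR k + 1 <= INR n) by nra.
      assert (0 <= mn^q * b) by nra.
      assert (mn^q * b * (INR k + 1) <= u n * INR n) by (apply Rmult_le_compat; lra).
      assert (mn^q <= mn^q * b * (INR k + 1) * M0).
      { replace (mn^q * b * (INR k + 1) * M0) with (mn^q * (b * (M0 * (INR k + 1)))) by ring.
        rewrite <- (Rmult_1_r (mn^q)) at 1. apply Rmult_le_compat_l; lra. }
      nra.
    - apply (Rmult_le_reg_r m0); [lra|]. field_simplify; [|lra].
      assert (u n <= Mx^q * b) by nra.
      assert (INR n <= (INR n0 + INR q) * (INR k + 1)) by nra.
      assert (0 <= u n) by (pose proof (Hp n ltac:(lia)); lra).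
      assert (u n * INR n <= Mx^q * b * ((INR n0 + INR q) * (INR k + 1))).
      { apply Rmult_le_compat; try lra; try apply pos_INR; nra. }
      assert (Mx^q * b * ((INR n0 + INR q) * (INR k + 1)) * m0 <= Mx^q * (INR n0 + INR q)).
      { replace (Mx^q * b * ((INR n0 + INR q) * (INR k + 1)) * m0) with
          ((Mx^q * (INR n0 + INR q)) * (b * (m0 * (INR k + 1)))) by ring.
        assert (0 <= Mx^q * (INR n0 + INR q)) by nra. nra. }
      nra. }
  destruct (fin_bounds u Hp n0) as [A [B [HA [HAB Hfin]]]].
  exists (Rmin A (mn^q / M0)), (Rmax B (Mx^q * (INR n0 + INR q) / m0)).
  assert (0 < mn^q / M0) by (apply Rdiv_lt_0_compat; lra).
  assert (mn ^ q / M0 <= Mx ^ q * (INR n0 + INR q) / m0).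
  { destruct (Hbig n0 (le_n _)); lra. }
  split; [unfold Rmin; destruct Rle_dec; lra|]. split; [unfold Rmin, Rmax; repeat destruct Rle_dec; lra|].
  intros n Hn. destruct (Nat.lt_ge_cases n n0).
  - specialize (Hfin n ltac:(lia)). unfold Rmin, Rmax; repeat destruct Rle_dec; lra.
  - specialize (Hbig n H1). unfold Rmin, Rmax; repeat destruct Rle_dec; lra.
Qed.

Lemma INR_pos1 n : (1 <= n)%nat -> 0 < INR n.
Proof. intros. apply lt_0_INR. lia. Qed.

Lemma RP_m2 x : 0 < x -> Rpower x (- (1 + 1)) = / (x * x).
Proof.
  intros Hx. rewrite Rpower_Ropp. replace (1 + 1) with (INR 2) by (simpl; ring).
  rewrite Rpower_pow by auto. f_equal. simpl. ring.
Qed.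

Lemma RP_m1 x : 0 < x -> Rpower x (Ropp 1) = / x.
Proof. intros Hx. rewrite Rpower_Ropp, Rpower_1; auto. Qed.

Lemma RP_mhalf x : 0 < x -> Rpower x (- (1/2)) = / sqrt x.
Proof.
  intros Hx. rewrite Rpower_Ropp. replace (1/2) with (/2) by field. rewrite Rpower_sqrt; auto.
Qed.

Lemma RP_m32 x : 0 < x -> Rpower x (- (1 + 1/2)) = / (x * sqrt x).
Proof.
  intros Hx. rewrite Rpower_Ropp, Rpower_plus, Rpower_1 by auto.
  replace (1/2) with (/2) by field. rewrite Rpower_sqrt; auto.
Qed.

Lemma finish1 lam x1 (P : list R) (d : nat -> R) n0 q Z al be L1 L2 (w e : nat -> R) s c :
  (1 <= n0)%nat -> (1 <= q)%nat -> 0 < Z -> 0 < al -> 0 < be -> 0 < L1 -> 0 < L2 -> 0 < c ->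
  s * s = 1 ->
  (forall n, (1 <= n)%nat -> 0 < d n) ->
  (forall n, (1 <= n)%nat -> L1 * d n <= d (S n) <= L2 * d n) ->
  (forall n, (1 <= n)%nat -> exists p, In p P /\ Rabs (xn lam x1 n - p) <= d n) ->
  (forall k, w k = d (n0 + q * k)%nat) ->
  (forall k, Z + INR k * al <= / w k <= Z + INR k * be) ->
  (forall k, Sset lam x1 (e k)) ->
  (forall k, c * (w k)^2 <= s * (e k - e (S k))) ->
  asymp_equiv d (fun n => / INR n) /\ box_dim (Sset lam x1) (1/2) /\ mink_nondegenerate (Sset lam x1).
Proof.
  intros Hn0 Hq HZ Hal Hbe HL1 HL2 Hc Hs Hd Hcmp HP Hw Hws HS Hgap.
  destruct (gen_asym d n0 q Z al be L1 L2) as [A [B [HA [HAB Hb]]]]; auto.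
  { intros k. rewrite <- Hw. auto. }
  split.
  { exists A, B. split; [lra|]. split; [lra|]. intros m Hm; pose proof (INR_pos1 m Hm);
    replace (d m / / INR m) with (d m * INR m) by (field; lra); apply Hb; auto. }
  set (M0 := Rmax Z be).
  assert (HM0 : Z <= M0 /\ be <= M0 /\ 0 < M0) by (unfold M0, Rmax; destruct Rle_dec; lra).
  replace (1/2) with (1 / (1 + 1)) by field.
  apply (gen_box lam x1 P 1 B (c / (M0 * M0)) e s); auto; try lra.
  - apply Rdiv_lt_0_compat; nra.
  - intros n Hn. destruct (HP n Hn) as [p [Hp Hnp]]. exists p. split; auto.
    pose proof (INR_pos1 n Hn). rewrite RP_m1 by auto. specialize (Hb n Hn).
    apply Rle_trans with (d n); auto. apply (Rmult_le_reg_r (INR n)); auto.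
    field_simplify; lra.
  - intros k. rewrite RP_m2 by (apply INR_pos1; lia). eapply Rle_trans; [|apply Hgap].
    pose proof (Hws k) as [_ H2]. pose proof (Hd (n0 + q * k)%nat ltac:(lia)). rewrite <- Hw in H.
    rewrite S_INR. pose proof (pos_INR k).
    assert (INR k * be <= INR k * M0) by (apply Rmult_le_compat_l; lra).
    assert (Hi : / w k <= M0 * (INR k + 1)) by lra.
    assert (Hw1 : / (M0 * (INR k + 1)) <= w k).
    { rewrite <- (Rinv_inv (w k)). apply Rinv_le_contravar; auto. apply Rinv_0_lt_compat; lra. }
    assert (0 < / (M0 * (INR k + 1))) by (apply Rinv_0_lt_compat; nra).
    assert (/ (M0 * (INR k + 1)) * / (M0 * (INR k + 1)) <= (w k)^2) by (simpl; nra).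
    replace (c / (M0 * M0) * / ((INR k + 1) * (INR k + 1))) with
      (c * (/ (M0 * (INR k + 1)) * / (M0 * (INR k + 1)))) by (field; lra).
    apply Rmult_le_compat_l; lra.
Qed.

Lemma finish2 lam x1 (P : list R) (d : nat -> R) n0 q Z al be L1 L2 (w e : nat -> R) s c :
  (1 <= n0)%nat -> (1 <= q)%nat -> 0 < Z -> 0 < al -> 0 < be -> 0 < L1 -> 0 < L2 -> 0 < c ->
  s * s = 1 ->
  (forall n, (1 <= n)%nat -> 0 < d n) ->
  (forall n, (1 <= n)%nat -> L1 * d n <= d (S n) <= L2 * d n) ->
  (forall n, (1 <= n)%nat -> exists p, In p P /\ Rabs (xn lam x1 n - p) <= d n) ->
  (forall k, w k = d (n0 + q * k)%nat) ->
  (forall k, Z + INR k * al <= / (w k)^2 <= Z + INR k * be) ->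
  (forall k, Sset lam x1 (e k)) ->
  (forall k, c * (w k)^3 <= s * (e k - e (S k))) ->
  asymp_equiv d (fun n => Rpower (INR n) (-1/2)) /\ box_dim (Sset lam x1) (2/3) /\
  mink_nondegenerate (Sset lam x1).
Proof.
  intros Hn0 Hq HZ Hal Hbe HL1 HL2 Hc Hs Hd Hcmp HP Hw Hws HS Hgap.
  destruct (gen_asym (fun n => (d n)^2) n0 q Z al be (L1^2) (L2^2)) as [A [B [HA [HAB Hb]]]]; auto;
    try (apply pow_lt; lra).
  { intros n Hn. pose proof (Hd n Hn). apply pow_lt; auto. }
  { intros n Hn. pose proof (Hd n Hn). pose proof (Hcmp n Hn) as [H1 H2].
    rewrite <- !Rpow_mult_distr. split; apply pow_incr; split; try nra. }
  { intros k. rewrite <- Hw. auto. }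
  assert (Hsq : forall n, (1 <= n)%nat -> d n * sqrt (INR n) = sqrt ((d n)^2 * INR n)).
  { intros n Hn. pose proof (Hd n Hn). rewrite sqrt_mult_alt. rewrite sqrt_pow2; lra.
    apply pow_le; lra. }
  split.
  { exists (sqrt A), (sqrt B). split; [apply sqrt_lt_R0; auto|]. split; [apply sqrt_le_1_alt; auto|].
    intros n Hn. pose proof (INR_pos1 n Hn). replace (-1/2) with (- (1/2)) by field.
    rewrite RP_mhalf by auto. pose proof (sqrt_lt_R0 _ H).
    replace (d n / / sqrt (INR n)) with (d n * sqrt (INR n)) by (field; lra).
    rewrite Hsq by auto. specialize (Hb n Hn). split; apply sqrt_le_1_alt; lra. }
  set (M0 := Rmax Z be).
  assert (HM0 : Z <= M0 /\ be <= M0 /\ 0 < M0) by (unfold M0, Rmax; destruct Rle_dec; lra).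
  replace (2/3) with (1 / (1 + 1/2)) by field.
  pose proof (sqrt_lt_R0 M0 ltac:(lra)) as HsM.
  apply (gen_box lam x1 P (1/2) (sqrt B) (c / (M0 * sqrt M0)) e s); auto; try lra.
  - apply sqrt_lt_R0; lra.
  - apply Rdiv_lt_0_compat; nra.
  - intros n Hn. destruct (HP n Hn) as [p [Hp Hnp]]. exists p. split; auto.
    pose proof (INR_pos1 n Hn). rewrite RP_mhalf by auto. pose proof (sqrt_lt_R0 _ H).
    apply Rle_trans with (d n); auto. apply (Rmult_le_reg_r (sqrt (INR n))); auto.
    replace (sqrt B * / sqrt (INR n) * sqrt (INR n)) with (sqrt B) by (field; lra).
    rewrite Hsq by auto. apply sqrt_le_1_alt. apply Hb; auto.
  - intros k. rewrite RP_m32 by (apply INR_pos1; lia). eapply Rle_trans; [|apply Hgap].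
    pose proof (Hws k) as [_ H2]. pose proof (Hd (n0 + q * k)%nat ltac:(lia)). rewrite <- Hw in H.
    rewrite S_INR. pose proof (pos_INR k).
    set (K1 := INR k + 1). assert (HK1 : 1 <= K1) by (unfold K1; lra).
    assert (INR k * be <= INR k * M0) by (apply Rmult_le_compat_l; lra).
    assert (Hi : / (w k)^2 <= M0 * K1) by (unfold K1; lra).
    assert (Hwp : 0 < (w k)^2) by (apply pow_lt; auto).
    assert (Hw1 : / (M0 * K1) <= (w k)^2).
    { rewrite <- (Rinv_inv ((w k)^2)). apply Rinv_le_contravar; auto. apply Rinv_0_lt_compat; lra. }
    assert (Hy : 0 < / (M0 * K1)) by (apply Rinv_0_lt_compat; nra).
    assert (Hs1 : sqrt (/ (M0 * K1)) <= w k).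
    { rewrite <- (sqrt_pow2 (w k)) by lra. apply sqrt_le_1_alt; auto. }
    assert (Hw3 : / (M0 * K1) * sqrt (/ (M0 * K1)) <= (w k)^3).
    { replace ((w k)^3) with ((w k)^2 * w k) by ring. apply Rmult_le_compat; try lra.
      apply sqrt_pos. }
    rewrite sqrt_inv, sqrt_mult_alt in Hw3 by lra.
    pose proof (sqrt_lt_R0 K1 ltac:(lra)).
    replace (c / (M0 * sqrt M0) * / (K1 * sqrt K1)) with
      (c * (/ (M0 * K1) * / (sqrt M0 * sqrt K1))) by (field; lra).
    apply Rmult_le_compat_l; lra.
Qed.

Lemma xn_S lam x1 n : (1 <= n)%nat -> xn lam x1 (S n) = F lam (xn lam x1 n).
Proof.
  intros Hn. unfold xn. replace (S n - 1)%nat with (S (n - 1)) by lia. reflexivity.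
Qed.

Lemma xn_1 lam x1 : xn lam x1 1 = x1.
Proof. reflexivity. Qed.

Lemma partA : exists delta, 0 < delta /\ forall x1, 0 < x1 < delta ->
     asymp_equiv (xn 1 x1) (fun n => / INR n) /\
     box_dim (Sset 1 x1) (1/2) /\ mink_nondegenerate (Sset 1 x1).
Proof.
  destruct (nf1 (F 1) 1 0 1) as [r0 [Hr0 Hnf]]; try lra.
  { intros u Hu. unfold F. replace (1 * u * (1 - u) - (u - 1 * u ^ 2)) with 0 by ring.
    rewrite Rabs_R0. lra. }
  exists (Rmin r0 (1/4)). split. { unfold Rmin; destruct Rle_dec; lra. }
  intros x1 Hx1. assert (Hx1' : x1 <= r0 /\ x1 <= 1/4) by (unfold Rmin in Hx1; destruct Rle_dec; lra).
  set (w := fun k => xn 1 x1 (S k)).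
  assert (Hrec : forall k, w (S k) = F 1 (w k)) by (intros k; unfold w; apply xn_S; lia).
  assert (Hw0 : w 0%nat = x1) by reflexivity.
  pose proof (Hnf w ltac:(rewrite Hw0; lra) Hrec) as H.
  assert (Hd : forall n, (1 <= n)%nat -> xn 1 x1 n = w (n - 1)%nat).
  { intros n Hn. unfold w. f_equal. lia. }
  assert (Hsm : forall k, 0 < w k <= 1/4).
  { intros k. induction k as [|k IH]; [rewrite Hw0; lra|].
    destruct (H k) as [_ [Hg _]]. destruct (H (S k)) as [[Hp _] _].
    split; [lra|]. assert (0 <= 1/2 * (w k)^2) by nra. lra. }
  apply (finish1 1 x1 (0 :: nil) (xn 1 x1) 1 1 (/ x1) (1/2) 3 (3/4) 1 w w 1 (1/2)); try lra; auto.
  - apply Rinv_0_lt_compat; lra.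
  - intros n Hn. rewrite Hd by auto. apply Hsm.
  - intros n Hn. rewrite xn_S by auto. rewrite Hd by auto. pose proof (Hsm (n-1)%nat).
    unfold F. split; nra.
  - intros n Hn. exists 0. split; [left; auto|]. rewrite Hd by auto. pose proof (Hsm (n-1)%nat).
    rewrite Rminus_0_r, Rabs_right by lra. lra.
  - intros k. rewrite Hd by lia. f_equal. lia.
  - intros k. destruct (H k) as [_ [_ [H1 H2]]]. rewrite Hw0 in H1, H2. lra.
  - intros k. exists (S k). split; [lia|reflexivity].
  - intros k. destruct (H k) as [_ [Hg _]]. lra.
Qed.

Lemma parity2 n : (1 <= n)%nat -> exists k, n = (1 + 2 * k)%nat \/ n = (2 + 2 * k)%nat.
Proof.
  intros Hn. destruct (Nat.Even_or_Odd n) as [[m Hm]|[m Hm]].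
  - exists (m - 1)%nat. right. lia.
  - exists m. left. lia.
Qed.

Lemma xn_S2 lam x1 n : (1 <= n)%nat -> xn lam x1 (S (S n)) = F lam (F lam (xn lam x1 n)).
Proof. intros Hn. rewrite xn_S by lia. rewrite xn_S by lia. reflexivity. Qed.

Lemma abs_pm1 s : s = 1 \/ s = -1 -> Rabs s = 1.
Proof. intros [-> | ->]; unfold Rabs; destruct Rcase_abs; lra. Qed.

Lemma partB : exists delta, 0 < delta /\ forall x1, 0 < Rabs (x1 - 2/3) < delta ->
     asymp_equiv (fun n => Rabs (xn 3 x1 n - 2/3)) (fun n => Rpower (INR n) (-1/2)) /\
     box_dim (Sset 3 x1) (2/3) /\ mink_nondegenerate (Sset 3 x1).
Proof.
  assert (Hg : forall y, F 3 (F 3 (2/3 + y)) - 2/3 = y - 18 * y^3 - 27 * y^4)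
    by (intros; unfold F; field).
  assert (Hnf : forall s, s = 1 \/ s = -1 -> exists r0, 0 < r0 /\ forall w : nat -> R,
      0 < w 0%nat <= r0 -> (forall k, w (S k) = s * (F 3 (F 3 (2/3 + s * w k)) - 2/3)) ->
      forall k, (0 < w k <= r0) /\ 18 / 2 * (w k)^3 <= w k - w (S k) /\
       / (w 0%nat)^2 + INR k * 18 <= / (w k)^2 <= / (w 0%nat)^2 + INR k * (9 * 18)).
  { intros s Hs. apply (nf2 (fun u => s * (F 3 (F 3 (2/3 + s * u)) - 2/3)) 18 27 1); try lra.
    intros u Hu. rewrite Hg.
    replace (s * (s * u - 18 * (s * u) ^ 3 - 27 * (s * u) ^ 4) - (u - 18 * u ^ 3))
      with (- 27 * s * u^4) by (destruct Hs as [-> | ->]; ring).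
    rewrite !Rabs_mult. replace (Rabs (-27)) with 27 by (rewrite Rabs_left; lra).
    replace (Rabs s) with 1 by (symmetry; apply abs_pm1; auto).
    rewrite Rabs_right by (apply Rle_ge, pow_le; lra). lra. }
  destruct (Hnf 1 ltac:(lra)) as [r1 [Hr1 Hnf1]].
  destruct (Hnf (-1) ltac:(lra)) as [r2 [Hr2 Hnf2]].
  set (delta := Rmin (Rmin r1 r2) (1/12)).
  exists delta. split. { unfold delta, Rmin; repeat destruct Rle_dec; lra. }
  intros x1 Hx1.
  assert (Hdl : delta <= r1 /\ delta <= r2 /\ delta <= 1/12)
    by (unfold delta, Rmin; repeat destruct Rle_dec; lra).
  set (s := if Rlt_dec 0 (x1 - 2/3) then 1 else -1).
  assert (Hs : (s = 1 \/ s = -1) /\ Rabs (x1 - 2/3) = s * (x1 - 2/3)).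
  { unfold s. destruct Rlt_dec.
    - split; [left; auto|]. rewrite Rabs_right; lra.
    - split; [right; auto|]. assert (x1 - 2/3 <> 0) by (intro Hc; rewrite Hc, Rabs_R0 in Hx1; lra).
      rewrite Rabs_left; lra. }
  destruct Hs as [Hs Habs1].
  assert (Hss : s * s = 1) by (destruct Hs as [-> | ->]; ring).
  set (d := fun n => Rabs (xn 3 x1 n - 2/3)).
  set (w := fun k => s * (xn 3 x1 (1 + 2 * k) - 2/3)).
  assert (Hxw : forall k, xn 3 x1 (1 + 2 * k) = 2/3 + s * w k).
  { intros k. unfold w. rewrite <- Rmult_assoc, Hss. ring. }
  assert (Hrec : forall k, w (S k) = s * (F 3 (F 3 (2/3 + s * w k)) - 2/3)).
  { intros k. rewrite <- Hxw. unfold w at 1. rewrite <- xn_S2 by lia. do 3 f_equal. lia. }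
  assert (Hw0 : w 0%nat = Rabs (x1 - 2/3)) by (unfold w; simpl; rewrite Habs1; reflexivity).
  assert (H : forall k, (0 < w k <= delta) /\ 18 / 2 * (w k)^3 <= w k - w (S k) /\
       / (w 0%nat)^2 + INR k * 18 <= / (w k)^2 <= / (w 0%nat)^2 + INR k * (9 * 18)).
  { assert (H0 : forall k, (0 < w k) /\ 18 / 2 * (w k)^3 <= w k - w (S k) /\
       / (w 0%nat)^2 + INR k * 18 <= / (w k)^2 <= / (w 0%nat)^2 + INR k * (9 * 18)).
    { intros k. destruct Hs as [Hs1|Hs1].
      - rewrite Hs1 in Hrec. destruct (Hnf1 w ltac:(rewrite Hw0; lra) Hrec k) as [[? ?] ?]; auto.
      - rewrite Hs1 in Hrec. destruct (Hnf2 w ltac:(rewrite Hw0; lra) Hrec k) as [[? ?] ?]; auto. }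
    intros k. destruct (H0 k) as [Hp [Hgp Hb]]. split; [split; [exact Hp|]|split; [exact Hgp|exact Hb]].
    clear Hp Hgp Hb.
    induction k as [|k IH]; [rewrite Hw0; lra|].
    destruct (H0 k) as [Hp' [Hgp' _]].
    assert (0 <= 18 / 2 * (w k)^3) by (apply Rmult_le_pos; [lra|apply pow_le; lra]). lra. }
  assert (Hd1 : forall k, d (1 + 2 * k)%nat = w k).
  { intros k. unfold d. rewrite Hxw. replace (2/3 + s * w k - 2/3) with (s * w k) by ring.
    rewrite Rabs_mult. destruct (H k) as [[Hp _] _].
    rewrite (Rabs_right (w k)) by lra. rewrite abs_pm1 by auto. ring. }
  assert (Hstep : forall n, (1 <= n)%nat -> d (S n) = d n * Rabs (1 + 3 * (xn 3 x1 n - 2/3))).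
  { intros n Hn. unfold d. rewrite xn_S by auto. rewrite <- Rabs_mult. rewrite <- Rabs_Ropp. f_equal.
    set (y := xn 3 x1 n - 2/3). replace (xn 3 x1 n) with (2/3 + y) by (unfold y; ring).
    unfold F. field. }
  assert (Hsmall : forall n, (1 <= n)%nat -> d n <= 1/6).
  { intros n Hn. destruct (parity2 n Hn) as [k [-> | ->]].
    - rewrite Hd1. destruct (H k) as [[_ ?] _]. lra.
    - replace (2 + 2 * k)%nat with (S (1 + 2 * k)) by lia. rewrite Hstep by lia. rewrite Hd1.
      destruct (H k) as [[? ?] _]. unfold d in Hd1. specialize (Hd1 k).
      assert (Rabs (1 + 3 * (xn 3 x1 (1 + 2 * k) - 2 / 3)) <= 2).
      { apply Rabs_le. rewrite <- Hd1 in H1. apply absle in H1 as [? ?]. split; lra. }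
      pose proof (Rabs_pos (1 + 3 * (xn 3 x1 (1 + 2 * k) - 2 / 3))). nra. }
  assert (Hcmp : forall n, (1 <= n)%nat -> 1/2 * d n <= d (S n) <= 2 * d n).
  { intros n Hn. rewrite Hstep by auto. pose proof (Hsmall n Hn).
    assert (Hy : Rabs (xn 3 x1 n - 2/3) <= 1/6) by auto. apply absle in Hy.
    assert (1/2 <= Rabs (1 + 3 * (xn 3 x1 n - 2 / 3)) <= 2).
    { rewrite Rabs_right by lra. lra. }
    pose proof (Rabs_pos (xn 3 x1 n - 2/3)). unfold d. split; nra. }
  assert (Hpos : forall n, (1 <= n)%nat -> 0 < d n).
  { intros n Hn. induction n as [|n IH]; [lia|].
    destruct (Nat.eq_dec n 0) as [->|Hn0].
    - pose proof (Hd1 0%nat) as E. simpl in E. rewrite E. destruct (H 0%nat) as [[? _] _]; auto.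
    - specialize (IH ltac:(lia)). pose proof (Hcmp n ltac:(lia)). lra. }
  apply (finish2 3 x1 (2/3 :: nil) d 1 2 (/ (w 0%nat)^2) 18 (9 * 18) (1/2) 2 w
    (fun k => xn 3 x1 (1 + 2 * k)) s (18/2)); auto; try lra.
  - rewrite Hw0. apply Rinv_0_lt_compat. apply pow_lt. lra.
  - intros n Hn. exists (2/3). split; [left; auto|]. unfold d; lra.
  - intros k. destruct (H k) as [_ [_ ?]]. auto.
  - intros k. exists (1 + 2 * k)%nat. split; [lia|reflexivity].
  - intros k. rewrite !Hxw. destruct (H k) as [_ [Hg' _]].
    replace (s * (2 / 3 + s * w k - (2 / 3 + s * w (S k)))) with ((s * s) * (w k - w (S k))) by ring.
    rewrite Hss. lra.
Qed.

Lemma ln_le_pow y s : 0 < y -> 0 < s -> ln y <= Rpower y s / s.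
Proof.
  intros Hy Hs. pose proof (exp_ineq1_le (s * ln y)).
  unfold Rpower. apply (Rmult_le_reg_l s); auto. field_simplify; lra.
Qed.

Lemma geo_dim0 lam x1 l N0 C rho : (1 <= N0)%nat -> 0 < C -> 0 < rho < 1 ->
  (forall k, Rabs (xn lam x1 (N0 + k) - l) <= C * rho ^ k) ->
  forall s, 0 < s -> upper_mink_zero (Sset lam x1) s.
Proof.
  intros HN0 HC Hrho Hgeo s Hs eta Heta.
  set (L := - ln rho).
  assert (HL : 0 < L). { unfold L. assert (ln rho < 0) by (rewrite <- ln_1; apply ln_increasing; lra). lra. }
  set (c1 := 2 * INR N0 + 6 + 2 * Rabs (ln C) / L).
  set (c2 := 8 / (s * L)).
  assert (Hc1 : 0 < c1).
  { unfold c1; pose proof (pos_INR N0); pose proof (Rabs_pos (ln C)).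
    assert (0 <= 2 * Rabs (ln C) / L) by (apply Rmult_le_pos; [lra|left; apply Rinv_0_lt_compat; lra]); lra. }
  assert (Hc2 : 0 < c2) by (unfold c2; apply Rdiv_lt_0_compat; nra).
  set (e1 := Rmin (Rmin C 1) (Rmin (exp (ln (eta / (2 * c1)) / s)) (exp (ln (eta / (2 * c2)) / (s / 2))))).
  assert (He1 : 0 < e1).
  { unfold e1. pose proof (exp_pos (ln (eta / (2 * c1)) / s)). pose proof (exp_pos (ln (eta / (2 * c2)) / (s/2))).
    unfold Rmin; repeat destruct Rle_dec; lra. }
  exists e1. split; auto. intros eps [Heps Heps1].
  assert (Hb : eps < C /\ eps < 1 /\ eps < exp (ln (eta / (2 * c1)) / s) /\ eps < exp (ln (eta / (2 * c2)) / (s / 2))).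
  { unfold e1, Rmin in Heps1. repeat destruct Rle_dec; lra. }
  destruct Hb as [HeC [He1' [Hes1 Hes2]]].
  assert (Hp1 : Rpower eps s < eta / (2 * c1)) by (apply RP_small; try lra; apply Rdiv_lt_0_compat; lra).
  assert (Hp2 : Rpower eps (s/2) < eta / (2 * c2)) by (apply RP_small; try lra; apply Rdiv_lt_0_compat; lra).
  set (T := ln (C / eps) / L).
  assert (HlnCe : 0 < ln (C / eps)).
  { rewrite <- ln_1. apply ln_increasing; [lra|]. apply (Rmult_lt_reg_r eps); auto. field_simplify; lra. }
  assert (HT : 0 <= T) by (unfold T; apply Rmult_le_pos; [lra|left; apply Rinv_0_lt_compat; lra]).
  destruct (ceil_nat T HT) as [k [[Hk1 Hk2] _]].
  assert (Hrk : C * rho ^ k <= eps).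
  { rewrite <- Rpower_pow by lra. unfold Rpower.
    assert (INR k * ln rho <= - ln (C / eps)).
    { replace (ln rho) with (- L) by (unfold L; ring).
      assert (T * L = ln (C / eps)) by (unfold T; field; lra). nra. }
    assert (exp (INR k * ln rho) <= exp (- ln (C / eps))).
    { destruct (Req_dec (INR k * ln rho) (- ln (C / eps))) as [E|E]; [rewrite E; lra|].
      left. apply exp_increasing. lra. }
    rewrite exp_Ropp, exp_ln in H0 by (apply Rdiv_lt_0_compat; lra).
    replace (/ (C / eps)) with (eps / C) in H0 by (field; lra).
    apply (Rmult_le_compat_l C) in H0; [|lra]. replace (C * (eps / C)) with eps in H0 by (field; lra). lra. }
  assert (Hm := nbhd_upper lam x1 (l :: nil) (N0 + k) eps eps ltac:(lra) Heps).
  assert (Hm' : open_measure (nbhd (Sset lam x1) eps) <= 2 * eps * INR (N0 + k) + 1 * (2 * eps + 2 * eps)).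
  { apply Hm. intros n Hn. exists l. split; [left; auto|].
    replace n with (N0 + (k + (n - N0 - k)))%nat by lia.
    eapply Rle_trans; [apply Hgeo|]. rewrite pow_add.
    assert (rho ^ (n - N0 - k) <= 1) by (apply pow_le1; lra).
    assert (0 <= rho ^ k) by (apply pow_le; lra).
    assert (C * rho ^ k * rho ^ (n - N0 - k) <= C * rho ^ k * 1) by (apply Rmult_le_compat_l; nra).
    rewrite <- Rmult_assoc. lra. }
  rewrite plus_INR in Hm'.
  unfold mink_ratio.
  replace (Rpower eps (1 - s)) with (eps * Rpower eps (- s)) by (rewrite RP_eps_mul by lra; f_equal; ring).
  assert (Hks : INR k <= 1 + Rabs (ln C) / L + (2 / (s * L)) * Rpower eps (- (s / 2))).
  { assert (Hln : ln (C / eps) <= Rabs (ln C) + Rpower (/ eps) (s / 2) / (s / 2)).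
    { unfold Rdiv at 1. rewrite ln_mult by (try lra; apply Rinv_0_lt_compat; lra).
      pose proof (Rle_abs (ln C)). pose proof (ln_le_pow (/ eps) (s / 2) ltac:(apply Rinv_0_lt_compat; lra) ltac:(lra)).
      lra. }
    rewrite RP_inv in Hln by lra.
    assert (T <= Rabs (ln C) / L + (2 / (s * L)) * Rpower eps (- (s / 2))).
    { assert (Heq : Rabs (ln C) / L + 2 / (s * L) * Rpower eps (- (s / 2)) =
        (Rabs (ln C) + Rpower eps (- (s / 2)) / (s / 2)) * / L) by (field; nra).
      rewrite Heq. unfold T. apply Rmult_le_compat_r; [left; apply Rinv_0_lt_compat; lra|exact Hln]. }
    lra. }
  pose proof (RP_pos eps (- s)) as Hps.
  apply Rle_lt_trans with ((2 * INR N0 + 2 * INR k + 4) * Rpower eps s).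
  { apply (Rmult_le_reg_r (eps * Rpower eps (- s))); [nra|].
    replace (open_measure (nbhd (Sset lam x1) eps) / (eps * Rpower eps (- s)) * (eps * Rpower eps (- s)))
      with (open_measure (nbhd (Sset lam x1) eps)) by (field; lra).
    assert (Rpower eps s * Rpower eps (- s) = 1).
    { rewrite <- Rpower_plus. replace (s + - s) with 0 by ring. apply Rpower_O; lra. }
    replace ((2 * INR N0 + 2 * INR k + 4) * Rpower eps s * (eps * Rpower eps (- s))) with
      ((2 * INR N0 + 2 * INR k + 4) * eps * (Rpower eps s * Rpower eps (- s))) by ring.
    rewrite H. lra. }
  assert (Hsplit : Rpower eps (- (s / 2)) * Rpower eps s = Rpower eps (s / 2)).
  { rewrite <- Rpower_plus. f_equal. field. }
  pose proof (RP_pos eps s). pose proof (RP_pos eps (s/2)). pose proof (RP_pos eps (- (s/2))).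
  apply Rle_lt_trans with (c1 * Rpower eps s + (c2 / 2) * Rpower eps (s / 2)).
  { rewrite <- Hsplit. unfold c1, c2.
    assert ((2 * INR N0 + 2 * INR k + 4) <= 2 * INR N0 + 6 + 2 * Rabs (ln C) / L +
       8 / (s * L) / 2 * Rpower eps (- (s / 2))).
    { assert (8 / (s * L) / 2 = 2 * (2 / (s * L))) by (field; nra). rewrite H2. lra. }
    nra. }
  assert (c1 * Rpower eps s < eta / 2).
  { apply (Rmult_lt_compat_l c1) in Hp1; auto. replace (c1 * (eta / (2 * c1))) with (eta / 2) in Hp1 by (field; lra). lra. }
  assert (c2 / 2 * Rpower eps (s / 2) < eta / 4).
  { apply (Rmult_lt_compat_l (c2 / 2)) in Hp2; [|lra]. replace (c2 / 2 * (eta / (2 * c2))) with (eta / 4) in Hp2 by (field; lra). lra. }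
  lra.
Qed.

Lemma F_01 lam x : 0 <= lam <= 4 -> 0 <= x <= 1 -> 0 <= F lam x <= 1.
Proof. intros Hl Hx. unfold F. assert (0 <= x * (1 - x) <= 1/4) by (split; [apply Rmult_le_pos; lra| pose proof (Rle_0_sqr (x - 1/2)); unfold Rsqr in *; nra]). replace (lam * x * (1 - x)) with (lam * (x * (1 - x))) by ring. split; nra. Qed.

Lemma orbit_01 lam x1 : 0 <= lam <= 4 -> 0 <= x1 <= 1 -> forall n, 0 <= xn lam x1 n <= 1.
Proof.
  intros Hl Hx n. unfold xn. generalize (n - 1)%nat. intros m. induction m; simpl; auto.
  apply F_01; auto.
Qed.

Lemma limit_01 (u : nat -> R) l : Un_cv u l -> (forall n, 0 <= u n <= 1) -> 0 <= l <= 1.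
Proof.
  intros Hc Hu. split.
  - destruct (Rle_or_lt 0 l); auto. destruct (Hc (- l) ltac:(lra)) as [N HN].
    specialize (HN N (le_n _)). unfold R_dist in HN. apply abslt in HN. specialize (Hu N). lra.
  - destruct (Rle_or_lt l 1); auto. destruct (Hc (l - 1) ltac:(lra)) as [N HN].
    specialize (HN N (le_n _)). unfold R_dist in HN. apply abslt in HN. specialize (Hu N). lra.
Qed.

Lemma pow_bern r k : 1 <= r -> 1 + INR k * (r - 1) <= r ^ k.
Proof.
  intros Hr. induction k as [|k IH]; [simpl; lra|]. rewrite S_INR. simpl.
  assert (1 <= r^k) by (apply pow_R1_Rle; lra). nra.
Qed.

Lemma caseA lam x1 l : 0 <= lam <= 4 -> 0 <= x1 <= 1 -> Un_cv (xn lam x1) l ->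
  (exists r rho, 0 < r /\ 0 < rho < 1 /\ forall x, 0 <= x <= 1 -> Rabs (x - l) <= r -> Rabs (F lam x - l) <= rho * Rabs (x - l)) ->
  exists N0 C rho, (1 <= N0)%nat /\ 0 < C /\ 0 < rho < 1 /\ forall k, Rabs (xn lam x1 (N0 + k) - l) <= C * rho ^ k.
Proof.
  intros Hl Hx Hc [r [rho [Hr [Hrho HF]]]].
  destruct (Hc r Hr) as [N HN]. exists (max N 1), r, rho. repeat split; try lia; try lra.
  intros k. induction k as [|k IH].
  - rewrite Nat.add_0_r. simpl. specialize (HN (max N 1) ltac:(lia)). unfold R_dist in HN. lra.
  - replace (max N 1 + S k)%nat with (S (max N 1 + k)) by lia. rewrite xn_S by lia.
    eapply Rle_trans. apply HF. apply orbit_01; auto.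
    specialize (HN (max N 1 + k)%nat ltac:(lia)). unfold R_dist in HN. lra.
    simpl. nra.
Qed.

Lemma caseB lam x1 l : 0 <= lam <= 4 -> 0 <= x1 <= 1 -> Un_cv (xn lam x1) l ->
  (exists r rho, 0 < r /\ 1 < rho /\ forall x, 0 <= x <= 1 -> Rabs (x - l) <= r -> rho * Rabs (x - l) <= Rabs (F lam x - l)) ->
  exists N0 C rho, (1 <= N0)%nat /\ 0 < C /\ 0 < rho < 1 /\ forall k, Rabs (xn lam x1 (N0 + k) - l) <= C * rho ^ k.
Proof.
  intros Hl Hx Hc [r [rho [Hr [Hrho HF]]]].
  destruct (Hc r Hr) as [N HN]. exists (max N 1), 1, (1/2). repeat split; try lia; try lra.
  intros k. set (n := (max N 1 + k)%nat).
  assert (Hgrow : forall j, rho ^ j * Rabs (xn lam x1 n - l) <= Rabs (xn lam x1 (n + j) - l)).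
  { intros j. induction j as [|j IH].
    - rewrite Nat.add_0_r. simpl. lra.
    - replace (n + S j)%nat with (S (n + j)) by lia. rewrite xn_S by (unfold n; lia).
      eapply Rle_trans; [|apply HF]. simpl. rewrite Rmult_assoc. apply Rmult_le_compat_l; lra.
      apply orbit_01; auto.
      specialize (HN (n + j)%nat ltac:(unfold n; lia)). unfold R_dist in HN. lra. }
  assert (Hz : Rabs (xn lam x1 n - l) = 0).
  { destruct (Rle_or_lt (Rabs (xn lam x1 n - l)) 0) as [H|H]. pose proof (Rabs_pos (xn lam x1 n - l)); lra.
    exfalso. destruct (archimed (r / (Rabs (xn lam x1 n - l) * (rho - 1)))) as [Ha _].
    set (z := up (r / (Rabs (xn lam x1 n - l) * (rho - 1)))) in *.
    assert (Hz0 : (0 <= z)%Z).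
    { apply le_IZR. assert (0 < r / (Rabs (xn lam x1 n - l) * (rho - 1))) by (apply Rdiv_lt_0_compat; nra). lra. }
    set (j := Z.to_nat z). assert (Hj : INR j = IZR z) by (unfold j; rewrite INR_IZR_INZ, Z2Nat.id; auto).
    pose proof (Hgrow j). pose proof (pow_bern rho j ltac:(lra)).
    specialize (HN (n + j)%nat ltac:(unfold n; lia)). unfold R_dist in HN.
    assert (r < INR j * (Rabs (xn lam x1 n - l) * (rho - 1))).
    { rewrite Hj. apply (Rmult_lt_reg_r (/ (Rabs (xn lam x1 n - l) * (rho - 1)))).
      apply Rinv_0_lt_compat; nra. rewrite Rmult_assoc, Rinv_r by nra. lra. }
    assert (0 <= Rabs (xn lam x1 n - l)) by apply Rabs_pos. nra. }
  rewrite Hz. assert (0 < 1 * (1/2) ^ k) by (rewrite Rmult_1_l; apply pow_lt; lra). lra.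
Qed.

Lemma partC : forall lam x1, 0 < lam <= 4 -> lam <> 1 -> lam <> 3 -> 0 < x1 < 1 ->
     (exists l, Un_cv (xn lam x1) l) -> box_dim (Sset lam x1) 0.
Proof.
  intros lam x1 Hl H1 H3 Hx [l Hc].
  assert (Hl' : 0 <= lam <= 4) by lra. assert (Hx' : 0 <= x1 <= 1) by lra.
  pose proof (orbit_01 lam x1 Hl' Hx') as Hor.
  pose proof (limit_01 _ l Hc Hor) as Hl01.
  assert (Hfix : F lam l = l).
  { apply (UL_sequence (fun n => xn lam x1 (S n))).
    - intros eps Heps. destruct (Hc (eps / lam) ltac:(apply Rdiv_lt_0_compat; lra)) as [N HN].
      exists (max N 1). intros n Hn. rewrite xn_S by lia. unfold R_dist.
      specialize (HN n ltac:(lia)). unfold R_dist in HN. pose proof (Hor n).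
      replace (F lam (xn lam x1 n) - F lam l) with (lam * (xn lam x1 n - l) * (1 - xn lam x1 n - l)) by (unfold F; ring).
      rewrite !Rabs_mult. rewrite (Rabs_right lam) by lra.
      assert (Rabs (1 - xn lam x1 n - l) <= 1) by (apply Rabs_le; lra).
      pose proof (Rabs_pos (xn lam x1 n - l)). pose proof (Rabs_pos (1 - xn lam x1 n - l)).
      apply (Rmult_lt_compat_l lam) in HN; [|lra]. replace (lam * (eps / lam)) with eps in HN by (field; lra).
      assert (lam * Rabs (xn lam x1 n - l) * Rabs (1 - xn lam x1 n - l) <= lam * Rabs (xn lam x1 n - l) * 1)
        by (apply Rmult_le_compat_l; nra). lra.
    - intros eps Heps. destruct (Hc eps Heps) as [N HN]. exists N. intros n Hn. apply HN. lia. }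
  assert (Hgeo : exists N0 C rho, (1 <= N0)%nat /\ 0 < C /\ 0 < rho < 1 /\
            forall k, Rabs (xn lam x1 (N0 + k) - l) <= C * rho ^ k).
  { unfold F in Hfix. assert (Hcase : l = 0 \/ lam * (1 - l) = 1).
    { destruct (Req_dec l 0); [left; auto|right]. apply (Rmult_eq_reg_l l); auto. lra. }
    destruct Hcase as [-> | Hp].
    - destruct (Rlt_or_le lam 1) as [Hlt|Hge].
      + apply caseA; auto. exists 1, lam. repeat split; try lra.
        intros x Hx01 _. unfold F. rewrite !Rminus_0_r. rewrite Rabs_mult, (Rabs_right (1 - x)) by lra.
        rewrite Rabs_mult, (Rabs_right lam) by lra. rewrite (Rabs_right x) by lra. nra.
      + apply caseB; auto. exists ((lam - 1) / (2 * lam)), ((lam + 1) / 2). repeat split; try lra.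
        * apply Rdiv_lt_0_compat; lra.
        * intros x Hx01 Hxr. unfold F. rewrite !Rminus_0_r in *. rewrite (Rabs_right x) in * by lra.
          rewrite (Rabs_right (lam * x * (1 - x))) by (apply Rle_ge; apply Rmult_le_pos; [apply Rmult_le_pos|]; lra).
          assert (1 < lam) by lra.
          assert (lam * x * (1 - x) - (lam + 1) / 2 * x = x * (lam * (1 - x) - (lam + 1) / 2)) by ring.
          assert (lam * x <= (lam - 1) / 2).
          { apply (Rmult_le_compat_l lam) in Hxr; [|lra]. replace (lam * ((lam - 1) / (2 * lam))) with ((lam - 1) / 2) in Hxr by (field; lra). lra. }
          nra.
    - assert (Hlam1 : 1 < lam).
      { destruct (Rlt_or_le lam 1); [|lra]. nra. }
      assert (Hl2 : l = 1 - 1 / lam) by (field_simplify; [|lra]; apply (Rmult_eq_reg_l lam); [|lra]; field_simplify; lra).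
      assert (HFl : forall x, F lam x - l = (x - l) * (1 - lam * x)).
      { intros x. unfold F. rewrite Hl2. field. lra. }
      assert (Hll : lam * l = lam - 1) by (rewrite Hl2; field; lra).
      destruct (Rlt_or_le lam 3) as [Hlt|Hge].
      + apply caseA; auto. set (a := Rabs (2 - lam)).
        assert (Ha : a < 1) by (unfold a; apply Rabs_def1; lra).
        assert (Ha0 : 0 <= a) by apply Rabs_pos.
        exists ((1 - a) / (2 * lam)), ((1 + a) / 2). repeat split; try lra.
        * apply Rdiv_lt_0_compat; lra.
        * intros x Hx01 Hxr. rewrite HFl, Rabs_mult.
          assert (Rabs (1 - lam * x) <= (1 + a) / 2).
          { replace (1 - lam * x) with ((2 - lam) - lam * (x - l)) by lra.
            eapply Rle_trans; [apply Rabs_triang|]. rewrite Rabs_Ropp, Rabs_mult, (Rabs_right lam) by lra.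
            fold a. apply (Rmult_le_compat_l lam) in Hxr; [|lra].
            replace (lam * ((1 - a) / (2 * lam))) with ((1 - a) / 2) in Hxr by (field; lra). lra. }
          pose proof (Rabs_pos (x - l)). nra.
      + assert (Hg3 : 3 < lam) by lra. apply caseB; auto.
        exists ((lam - 3) / (2 * lam)), ((lam - 1) / 2). repeat split; try lra.
        * apply Rdiv_lt_0_compat; lra.
        * intros x Hx01 Hxr. rewrite HFl, Rabs_mult.
          assert ((lam - 1) / 2 <= Rabs (1 - lam * x)).
          { replace (1 - lam * x) with ((2 - lam) - lam * (x - l)) by lra.
            pose proof (Rabs_triang_inv (2 - lam) (lam * (x - l))).
            rewrite Rabs_mult, (Rabs_right lam) in H by lra. rewrite (Rabs_left (2 - lam)) in H by lra.
            apply (Rmult_le_compat_l lam) in Hxr; [|lra].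
            replace (lam * ((lam - 3) / (2 * lam))) with ((lam - 3) / 2) in Hxr by (field; lra). lra. }
          pose proof (Rabs_pos (x - l)). nra. }
  destruct Hgeo as [N0 [C [rho [HN0 [HC [Hrho Hg]]]]]].
  apply dim0. apply (geo_dim0 lam x1 l N0 C rho); auto.
Qed.

Fixpoint horner (l : list R) (x : R) : R :=
  match l with nil => 0 | c :: l' => c + x * horner l' x end.
Fixpoint sumabs (l : list R) : R :=
  match l with nil => 0 | c :: l' => Rabs c + sumabs l' end.

Lemma sumabs_pos l : 0 <= sumabs l.
Proof. induction l; simpl; [lra|]. pose proof (Rabs_pos a); lra. Qed.

Lemma horner_bound l x : Rabs x <= 1 -> Rabs (horner l x) <= sumabs l.
Proof.
  intros Hx. induction l as [|c l IH]; simpl. { rewrite Rabs_R0; lra. }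
  eapply Rle_trans; [apply Rabs_triang|]. rewrite Rabs_mult.
  pose proof (Rabs_pos x). pose proof (Rabs_pos (horner l x)). nra.
Qed.

Definition Pg (A B C y : R) : R := - y + A * y^2 + B * y^3 + C * y^4.
Definition Qd (A B C : R) : list R := 
  (A*B + A^3) ::
  (3*B^2 - 6*A*C - A^2*B) ::
  (- B*C - 5*A*B^2 + 8*A^2*C + A^3*B) ::
  (- 4*C^2 - 3*B^3 + 8*A*B*C + 3*A^2*B^2 - 4*A^3*C) ::
  (13*A*C^2 + 3*A*B^3 - 9*A^2*B*C + A^4*C) ::
  (9*B*C^2 + B^4 - 6*A*B^2*C - 12*A^2*C^2 + 4*A^3*B*C) ::
  (6*C^3 - B^3*C - 21*A*B*C^2 + 6*A^2*B^2*C + 4*A^3*C^2) ::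
  (- 9*B^2*C^2 - 12*A*C^3 + 4*A*B^3*C + 12*A^2*B*C^2) ::
  (- 11*B*C^3 + B^4*C + 12*A*B^2*C^2 + 6*A^2*C^3) ::
  (- 4*C^4 + 4*B^3*C^2 + 12*A*B*C^3) ::
  (6*B^2*C^3 + 4*A*C^4) ::
  (4*B*C^4) ::
  (C^5) :: nil.

Lemma Pg_Pg A B C y : Pg A B C (Pg A B C y) = y - (2 * A^2 + 2 * B) * y^3 + y^4 * horner (Qd A B C) y.
Proof. unfold Pg, Qd. simpl horner. ring. Qed.

Lemma F_shift lam a b y : F lam a = b -> F lam (a + y) = b + (lam * (1 - 2 * a) * y - lam * y^2).
Proof. intros H. rewrite <- H. unfold F. ring. Qed.

Lemma near_step lam a b y : 0 < lam -> F lam a = b ->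
  Rabs y <= Rabs (lam * (1 - 2 * a)) / (2 * lam) ->
  Rabs (lam * (1 - 2 * a)) / 2 * Rabs y <= Rabs (F lam (a + y) - b) <= 2 * Rabs (lam * (1 - 2 * a)) * Rabs y.
Proof.
  intros Hl HF Hy. rewrite (F_shift lam a b y HF).
  replace (b + (lam * (1 - 2 * a) * y - lam * y ^ 2) - b) with (lam * (1 - 2 * a) * y - lam * y ^ 2) by ring.
  set (mu := lam * (1 - 2 * a)) in *.
  assert (Hy2 : Rabs (lam * y^2) = lam * Rabs y * Rabs y).
  { rewrite Rabs_mult, (Rabs_right lam) by lra. simpl. rewrite Rmult_1_r, Rabs_mult. ring. }
  assert (Hly : lam * Rabs y <= Rabs mu / 2).
  { apply (Rmult_le_compat_l lam) in Hy; [|lra]. replace (lam * (Rabs mu / (2 * lam))) with (Rabs mu / 2) in Hy by (field; lra). lra. }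
  pose proof (Rabs_pos y).
  assert (lam * Rabs y * Rabs y <= Rabs mu / 2 * Rabs y) by (apply Rmult_le_compat_r; lra).
  split.
  - pose proof (Rabs_triang_inv (mu * y) (lam * y^2)). rewrite Rabs_mult, Hy2 in H1. lra.
  - pose proof (Rabs_triang (mu * y) (- (lam * y^2))). rewrite Rabs_Ropp, Rabs_mult, Hy2 in H1.
    replace (mu * y + - (lam * y ^ 2)) with (mu * y - lam * y ^ 2) in H1 by ring.
    pose proof (Rabs_pos mu). assert (0 <= Rabs mu * Rabs y) by (apply Rmult_le_pos; lra). lra.
Qed.

Lemma dist2_eq1 x a1 a2 : Rabs (x - a1) <= Rabs (a1 - a2) / 2 -> dist2 x a1 a2 = Rabs (x - a1).
Proof.
  intros H. unfold dist2. apply Rmin_left.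
  pose proof (Rabs_triang (a1 - x) (x - a2)). replace (a1 - x + (x - a2)) with (a1 - a2) in H0 by ring.
  rewrite (Rabs_minus_sym a1 x) in H0. lra.
Qed.

Lemma dist2_comm x a1 a2 : dist2 x a1 a2 = dist2 x a2 a1.
Proof. unfold dist2. apply Rmin_comm. Qed.

Lemma xn_S4 lam x1 n : (1 <= n)%nat -> xn lam x1 (4 + n) = F lam (F lam (F lam (F lam (xn lam x1 n)))).
Proof. intros Hn. simpl. rewrite !xn_S by lia. reflexivity. Qed.

Lemma asymp_ext (f g h : nat -> R) : (forall n, f n = g n) -> asymp_equiv f h -> asymp_equiv g h.
Proof.
  intros E [A [B [HA [HAB H]]]]. exists A, B. split; [auto|]. split; [auto|]. intros m Hm. rewrite <- E. apply H; auto.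
Qed.

Lemma PDcore lam a1 a2 : 0 < lam -> a1 <> a2 -> F lam a1 = a2 -> F lam a2 = a1 ->
  (lam * (1 - 2 * a1)) * (lam * (1 - 2 * a2)) = -1 ->
  exists delta, 0 < delta /\ forall x1, 0 < Rabs (x1 - a1) < delta ->
    asymp_equiv (fun n => dist2 (xn lam x1 n) a1 a2) (fun n => Rpower (INR n) (-1/2)) /\
    box_dim (Sset lam x1) (2/3) /\ mink_nondegenerate (Sset lam x1).
Proof.
  intros Hl Hne H12 H21 Hm.
  set (m1 := lam * (1 - 2 * a1)) in *. set (m2 := lam * (1 - 2 * a2)) in *.
  set (g := Rabs (a1 - a2)).
  assert (Hg : 0 < g) by (unfold g; apply Rabs_pos_lt; intro; apply Hne; lra).
  assert (Hg' : Rabs (a2 - a1) = g) by (unfold g; apply Rabs_minus_sym).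
  assert (Hprod : Rabs m1 * Rabs m2 = 1).
  { rewrite <- Rabs_mult, Hm. unfold Rabs; destruct Rcase_abs; lra. }
  assert (Hm1 : 0 < Rabs m1).
  { destruct (Rabs_pos m1) as [|E]; auto. rewrite <- E in Hprod. lra. }
  assert (Hm2 : 0 < Rabs m2).
  { destruct (Rabs_pos m2) as [|E]; auto. rewrite <- E in Hprod. lra. }
  set (mn := Rmin (Rabs m1) (Rabs m2)). set (Mx := Rmax (Rabs m1) (Rabs m2)).
  assert (Hmn : 0 < mn /\ mn <= Rabs m1 /\ mn <= Rabs m2) by (unfold mn, Rmin; destruct Rle_dec; lra).
  assert (HMx : Rabs m1 <= Mx /\ Rabs m2 <= Mx) by (unfold Mx, Rmax; destruct Rle_dec; lra).
  assert (HMx1 : 1 <= Mx).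
  { destruct (Rle_or_lt 1 Mx) as [|Hc]; auto. exfalso.
    assert (Rabs m1 * Rabs m2 < 1 * 1) by (apply Rmult_le_0_lt_compat; lra). lra. }
  set (rho := Rmin (mn / (2 * lam)) (g / (4 * Mx))).
  assert (Hrho : 0 < rho /\ rho <= mn / (2 * lam) /\ rho <= g / (4 * Mx)).
  { unfold rho, Rmin. assert (0 < mn / (2 * lam)) by (apply Rdiv_lt_0_compat; lra).
    assert (0 < g / (4 * Mx)) by (apply Rdiv_lt_0_compat; lra). destruct Rle_dec; lra. }
  assert (Hrho2 : 2 * Mx * rho <= g / 2).
  { apply Rle_trans with (2 * Mx * (g / (4 * Mx))). apply Rmult_le_compat_l; lra. right; field; lra. }
  assert (Hrhog : rho <= g / 2).
  { apply Rle_trans with (g / (4 * Mx)); [lra|]. apply (Rmult_le_reg_r (4 * Mx)); [lra|].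
    field_simplify; [|lra]. nra. }
  assert (Hstep : forall x, dist2 x a1 a2 <= rho ->
     mn / 2 * dist2 x a1 a2 <= dist2 (F lam x) a1 a2 <= 2 * Mx * dist2 x a1 a2).
  { intros x Hx. destruct (Rle_or_lt (Rabs (x - a1)) (Rabs (x - a2))) as [Hc|Hc].
    - assert (E : dist2 x a1 a2 = Rabs (x - a1)) by (unfold dist2; apply Rmin_left; auto).
      rewrite E in *. pose proof (near_step lam a1 a2 (x - a1) Hl H12) as Hns.
      replace (a1 + (x - a1)) with x in Hns by ring. fold m1 in Hns.
      assert (Rabs (x - a1) <= Rabs m1 / (2 * lam)).
      { apply Rle_trans with (mn / (2 * lam)); [lra|]. unfold Rdiv. apply Rmult_le_compat_r; [|lra].
        left; apply Rinv_0_lt_compat; lra. }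
      specialize (Hns H). pose proof (Rabs_pos (x - a1)).
      assert (Rabs (F lam x - a2) <= g / 2).
      { apply Rle_trans with (2 * Mx * rho); auto. destruct Hns as [_ Hns]. eapply Rle_trans; [apply Hns|].
        assert (Rabs m1 * Rabs (x - a1) <= Mx * rho) by (apply Rmult_le_compat; lra). lra. }
      assert (E2 : dist2 (F lam x) a1 a2 = Rabs (F lam x - a2)).
      { rewrite dist2_comm. apply dist2_eq1. lra. }
      rewrite E2. destruct Hns as [Hn1 Hn2]. split.
      + eapply Rle_trans; [|apply Hn1]. apply Rmult_le_compat_r; lra.
      + eapply Rle_trans; [apply Hn2|]. apply Rmult_le_compat_r; lra.
    - assert (E : dist2 x a1 a2 = Rabs (x - a2)) by (unfold dist2; apply Rmin_right; lra).
      rewrite E in *. pose proof (near_step lam a2 a1 (x - a2) Hl H21) as Hns.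
      replace (a2 + (x - a2)) with x in Hns by ring. fold m2 in Hns.
      assert (Rabs (x - a2) <= Rabs m2 / (2 * lam)).
      { apply Rle_trans with (mn / (2 * lam)); [lra|]. unfold Rdiv. apply Rmult_le_compat_r; [|lra].
        left; apply Rinv_0_lt_compat; lra. }
      specialize (Hns H). pose proof (Rabs_pos (x - a2)).
      assert (Rabs (F lam x - a1) <= g / 2).
      { apply Rle_trans with (2 * Mx * rho); auto. destruct Hns as [_ Hns]. eapply Rle_trans; [apply Hns|].
        assert (Rabs m2 * Rabs (x - a2) <= Mx * rho) by (apply Rmult_le_compat; lra). lra. }
      assert (E2 : dist2 (F lam x) a1 a2 = Rabs (F lam x - a1)) by (apply dist2_eq1; fold g; lra).
      rewrite E2. destruct Hns as [Hn1 Hn2]. split.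
      + eapply Rle_trans; [|apply Hn1]. apply Rmult_le_compat_r; lra.
      + eapply Rle_trans; [apply Hn2|]. apply Rmult_le_compat_r; lra. }
  set (A := - lam * (m2 + m1^2)). set (B := 2 * lam^2 * m1). set (C := - lam^3).
  set (K := 2 * A^2 + 2 * B). set (MQ := sumabs (Qd A B C)).
  assert (HK : 0 < K).
  { assert (E : K * m1^2 = 2 * lam^2 * (m1^6 + 1)).
    { transitivity (2 * lam^2 * (m1^6 + 1) + 2 * lam^2 * ((m1 * m2)^2 - 1 + 2 * m1^3 * (m1 * m2 + 1))).
      - unfold K, A, B. ring.
      - rewrite Hm. ring. }
    assert (0 < m1^2). { assert (m1 <> 0) by (intro E0; rewrite E0, Rabs_R0 in Hm1; lra). nra. }
    assert (0 < 2 * lam^2 * (m1^6 + 1)).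
    { assert (0 <= m1^6) by (replace (m1^6) with ((m1^3)^2) by ring; nra). nra. }
    nra. }
  assert (H2step : forall y, F lam (F lam (a1 + y)) = a1 + Pg A B C y).
  { intros y. rewrite (F_shift lam a1 a2 y H12). rewrite (F_shift lam a2 a1 _ H21). f_equal.
    fold m1 m2. transitivity (Pg A B C y + (m1 * m2 + 1) * y).
    - unfold Pg, A, B, C. ring.
    - rewrite Hm. ring. }
  assert (H4step : forall y, F lam (F lam (F lam (F lam (a1 + y)))) = a1 + Pg A B C (Pg A B C y)).
  { intros y. rewrite H2step, H2step. reflexivity. }
  set (h := fun s u => s * Pg A B C (Pg A B C (s * u))).
  assert (Hh : forall s, s = 1 \/ s = -1 -> forall u, 0 < u <= 1 ->
              Rabs (h s u - (u - K * u^3)) <= MQ * u^4).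
  { intros s Hs u Hu. unfold h. rewrite Pg_Pg.
    replace (s * (s * u - (2 * A ^ 2 + 2 * B) * (s * u) ^ 3 + (s * u) ^ 4 * horner (Qd A B C) (s * u)) - (u - K * u ^ 3))
      with (s * u^4 * horner (Qd A B C) (s * u)) by (unfold K; destruct Hs as [-> | ->]; ring).
    rewrite !Rabs_mult. rewrite abs_pm1 by auto.
    rewrite (Rabs_right (u^4)) by (apply Rle_ge, pow_le; lra).
    assert (Rabs (s * u) <= 1) by (rewrite Rabs_mult, abs_pm1, Rabs_right by (auto; lra); lra).
    pose proof (horner_bound (Qd A B C) (s * u) H). fold MQ in H0.
    assert (0 <= u^4) by (apply pow_le; lra). nra. }
  assert (HMQ : 0 <= MQ) by apply sumabs_pos.
  destruct (nf2 (h 1) K MQ 1 HK HMQ ltac:(lra) (Hh 1 ltac:(auto))) as [r1 [Hr1 Hnf1]].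
  destruct (nf2 (h (-1)) K MQ 1 HK HMQ ltac:(lra) (Hh (-1) ltac:(auto))) as [r2 [Hr2 Hnf2]].
  set (L2 := 2 * Mx).
  assert (HL2 : 1 <= L2) by (unfold L2; lra).
  assert (HL23 : 1 <= L2^3) by (apply pow_R1_Rle; lra).
  set (delta := Rmin (Rmin r1 r2) (rho / L2^3)).
  assert (Hdl : 0 < delta /\ delta <= r1 /\ delta <= r2 /\ delta <= rho / L2^3).
  { unfold delta, Rmin. assert (0 < rho / L2^3) by (apply Rdiv_lt_0_compat; lra).
    repeat destruct Rle_dec; lra. }
  assert (HdL : L2^3 * delta <= rho).
  { apply Rle_trans with (L2^3 * (rho / L2^3)). apply Rmult_le_compat_l; lra. right; field; lra. }
  assert (Hdr : delta <= rho).
  { apply Rle_trans with (L2^3 * delta); [|auto]. destruct Hdl as [? _]. nra. }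
  exists delta. split; [lra|]. intros x1 Hx1.
  set (s := if Rlt_dec 0 (x1 - a1) then 1 else -1).
  assert (Hs : (s = 1 \/ s = -1) /\ Rabs (x1 - a1) = s * (x1 - a1)).
  { unfold s. destruct Rlt_dec.
    - split; [left; auto|]. rewrite Rabs_right; lra.
    - split; [right; auto|]. assert (x1 - a1 <> 0) by (intro Hc; rewrite Hc, Rabs_R0 in Hx1; lra).
      rewrite Rabs_left; lra. }
  destruct Hs as [Hs Habs1].
  assert (Hss : s * s = 1) by (destruct Hs as [-> | ->]; ring).
  set (w := fun k => s * (xn lam x1 (1 + 4 * k) - a1)).
  assert (Hxw : forall k, xn lam x1 (1 + 4 * k) = a1 + s * w k).
  { intros k. unfold w. rewrite <- Rmult_assoc, Hss. ring. }
  assert (Hrec : forall k, w (S k) = h s (w k)).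
  { intros k. unfold h. unfold w at 1. replace (1 + 4 * S k)%nat with (4 + (1 + 4 * k))%nat by lia.
    rewrite xn_S4 by lia. rewrite Hxw. rewrite H4step. ring. }
  assert (Hw0 : w 0%nat = Rabs (x1 - a1)) by (unfold w; simpl; rewrite Habs1; reflexivity).
  assert (H : forall k, (0 < w k <= delta) /\ K / 2 * (w k)^3 <= w k - w (S k) /\
       / (w 0%nat)^2 + INR k * K <= / (w k)^2 <= / (w 0%nat)^2 + INR k * (9 * K)).
  { assert (H0 : forall k, (0 < w k) /\ K / 2 * (w k)^3 <= w k - w (S k) /\
       / (w 0%nat)^2 + INR k * K <= / (w k)^2 <= / (w 0%nat)^2 + INR k * (9 * K)).
    { intros k. destruct Hs as [Hs1|Hs1].
      - rewrite Hs1 in Hrec. destruct (Hnf1 w ltac:(rewrite Hw0; lra) Hrec k) as [[? ?] ?]; auto.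
      - rewrite Hs1 in Hrec. destruct (Hnf2 w ltac:(rewrite Hw0; lra) Hrec k) as [[? ?] ?]; auto. }
    intros k. destruct (H0 k) as [Hp [Hgp Hb]]. split; [split; [exact Hp|]|split; [exact Hgp|exact Hb]].
    clear Hp Hgp Hb.
    induction k as [|k IH]; [rewrite Hw0; lra|].
    destruct (H0 k) as [Hp' [Hgp' _]].
    assert (0 <= K / 2 * (w k)^3) by (apply Rmult_le_pos; [lra|apply pow_le; lra]). lra. }
  set (d := fun n => dist2 (xn lam x1 n) a1 a2).
  assert (Hd1 : forall k, d (1 + 4 * k)%nat = w k).
  { intros k. unfold d. destruct (H k) as [[Hp Hle] _]. rewrite Hxw. rewrite dist2_eq1.
    - replace (a1 + s * w k - a1) with (s * w k) by ring. rewrite Rabs_mult, abs_pm1, Rabs_right by (auto; lra). ring.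
    - replace (a1 + s * w k - a1) with (s * w k) by ring. rewrite Rabs_mult, abs_pm1, Rabs_right by (auto; lra). fold g. lra. }
  assert (Hblock : forall k j, (j <= 3)%nat -> d (1 + 4 * k + j)%nat <= L2^j * w k).
  { intros k j. induction j as [|j IH]; intros Hj.
    - rewrite Nat.add_0_r, Hd1. simpl. lra.
    - specialize (IH ltac:(lia)). destruct (H k) as [[Hp Hle] _].
      assert (L2^j <= L2^3) by (apply Rle_pow; auto; lia).
      assert (Hsm : d (1 + 4 * k + j)%nat <= rho).
      { apply Rle_trans with (L2^j * w k); auto. apply Rle_trans with (L2^3 * delta); auto.
        apply Rmult_le_compat; try lra. apply pow_le; lra. }
      replace (1 + 4 * k + S j)%nat with (S (1 + 4 * k + j)) by lia.
      set (m := (1 + 4 * k + j)%nat) in *.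
      assert (E : d (S m) = dist2 (F lam (xn lam x1 m)) a1 a2) by (unfold d; rewrite xn_S by (unfold m; lia); auto).
      rewrite E. destruct (Hstep _ Hsm) as [_ Hs2]. fold L2 in Hs2.
      change (dist2 (xn lam x1 m) a1 a2) with (d m) in Hs2.
      eapply Rle_trans; [apply Hs2|]. simpl.
      rewrite Rmult_assoc. apply Rmult_le_compat_l; lra. }
  assert (Hsmall : forall n, (1 <= n)%nat -> d n <= rho).
  { intros n Hn. set (k := ((n - 1) / 4)%nat). set (j := ((n - 1) mod 4)%nat).
    assert (Hdm : (n - 1 = 4 * k + j)%nat) by (unfold k, j; apply Nat.div_mod; lia).
    assert (Hj : (j < 4)%nat) by (unfold j; apply Nat.mod_upper_bound; lia).
    replace n with (1 + 4 * k + j)%nat by lia.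
    eapply Rle_trans; [apply Hblock; lia|]. destruct (H k) as [[Hp Hle] _].
    assert (L2^j <= L2^3) by (apply Rle_pow; auto; lia).
    apply Rle_trans with (L2^3 * delta); auto. apply Rmult_le_compat; try lra. apply pow_le; lra. }
  assert (Hcmp : forall n, (1 <= n)%nat -> mn / 2 * d n <= d (S n) <= 2 * Mx * d n).
  { intros n Hn. unfold d. rewrite xn_S by auto. apply Hstep. apply Hsmall; auto. }
  assert (Hpos : forall n, (1 <= n)%nat -> 0 < d n).
  { intros n Hn. induction n as [|n IH]; [lia|].
    destruct (Nat.eq_dec n 0) as [->|Hn0].
    - pose proof (Hd1 0%nat) as E. simpl in E. rewrite E. destruct (H 0%nat) as [[? _] _]; auto.
    - specialize (IH ltac:(lia)). pose proof (Hcmp n ltac:(lia)). nra. }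
  apply (finish2 lam x1 (a1 :: a2 :: nil) d 1 4 (/ (w 0%nat)^2) K (9 * K) (mn / 2) (2 * Mx) w
    (fun k => xn lam x1 (1 + 4 * k)) s (K / 2)); auto; try lra.
  - rewrite Hw0. apply Rinv_0_lt_compat. apply pow_lt. lra.
  - intros n Hn. unfold d, dist2, Rmin. destruct Rle_dec.
    + exists a1. split; [left; auto|lra].
    + exists a2. split; [right; left; auto|lra].
  - intros k. destruct (H k) as [_ [_ ?]]. auto.
  - intros k. exists (1 + 4 * k)%nat. split; [lia|reflexivity].
  - intros k. rewrite !Hxw. destruct (H k) as [_ [Hg'' _]].
    replace (s * (a1 + s * w k - (a1 + s * w (S k)))) with ((s * s) * (w k - w (S k))) by ring.
    rewrite Hss. lra.
Qed.

Lemma partD : forall a1 a2, a1 <> a2 ->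
     F (1 + sqrt 6) a1 = a2 -> F (1 + sqrt 6) a2 = a1 ->
     exists delta, 0 < delta /\ forall x1, x1 <> a1 -> x1 <> a2 ->
       dist2 x1 a1 a2 < delta ->
       asymp_equiv (fun n => dist2 (xn (1 + sqrt 6) x1 n) a1 a2)
                   (fun n => Rpower (INR n) (-1/2)) /\
       box_dim (Sset (1 + sqrt 6) x1) (2/3) /\
       mink_nondegenerate (Sset (1 + sqrt 6) x1).
Proof.
  intros a1 a2 Hne H12 H21.
  set (lam := 1 + sqrt 6) in *.
  assert (Hs6 : sqrt 6 * sqrt 6 = 6) by (apply sqrt_sqrt; lra).
  assert (Hs6p : 0 <= sqrt 6) by apply sqrt_pos.
  assert (Hl : 0 < lam) by (unfold lam; lra).
  assert (Hsq : lam * lam = 2 * lam + 5) by (unfold lam; nra).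
  assert (H1 : lam * (1 - a1 - a2) = -1).
  { assert (E : a2 - a1 = lam * (a1 - a2) * (1 - a1 - a2)).
    { rewrite <- H12 at 1. rewrite <- H21 at 2. unfold F. ring. }
    assert (E2 : (a1 - a2) * (lam * (1 - a1 - a2) + 1) = 0) by (rewrite Rmult_plus_distr_l; nra).
    apply Rmult_integral in E2 as [E2|E2]; [exfalso; apply Hne; lra|lra]. }
  assert (H2 : lam * (a1 * a2) = a1 + a2).
  { assert (E : F lam a1 = lam * a1 - lam * a1 * a1) by (unfold F; ring).
    rewrite H12 in E.
    assert (a1 * (lam * (1 - a1 - a2)) = - a1) by (rewrite H1; ring).
    nra. }
  assert (Hm : (lam * (1 - 2 * a1)) * (lam * (1 - 2 * a2)) = -1).
  { replace ((lam * (1 - 2 * a1)) * (lam * (1 - 2 * a2))) with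
      (lam * lam - 2 * lam * (lam * (a1 + a2)) + 4 * lam * (lam * (a1 * a2))) by ring.
    rewrite H2.
    replace (lam * (a1 + a2)) with (lam + 1) by lra. nra. }
  assert (Hm' : (lam * (1 - 2 * a2)) * (lam * (1 - 2 * a1)) = -1) by lra.
  destruct (PDcore lam a1 a2 Hl Hne H12 H21 Hm) as [d1 [Hd1 Hc1]].
  destruct (PDcore lam a2 a1 Hl (not_eq_sym Hne) H21 H12 Hm') as [d2 [Hd2 Hc2]].
  exists (Rmin d1 d2). split; [unfold Rmin; destruct Rle_dec; lra|].
  intros x1 Hx1 Hx2 Hdist.
  assert (Hmin : Rmin d1 d2 <= d1 /\ Rmin d1 d2 <= d2) by (unfold Rmin; destruct Rle_dec; lra).
  destruct (Rle_or_lt (Rabs (x1 - a1)) (Rabs (x1 - a2))) as [Hc|Hc].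
  - assert (E : dist2 x1 a1 a2 = Rabs (x1 - a1)) by (unfold dist2; apply Rmin_left; auto).
    apply Hc1. split; [apply Rabs_pos_lt; intro; apply Hx1; lra|lra].
  - assert (E : dist2 x1 a1 a2 = Rabs (x1 - a2)) by (unfold dist2; apply Rmin_right; lra).
    destruct (Hc2 x1) as [Ha [Hb Hnd]]. { split; [apply Rabs_pos_lt; intro; apply Hx2; lra|lra]. }
    split; [|split; auto].
    apply (asymp_ext (fun n => dist2 (xn lam x1 n) a2 a1)); auto.
    intros n. apply dist2_comm.
Qed.

Definition cpol (t x : R) : R := (25 + 11 * t) * x^3 - (42 + 35/2 * t) * x^2 + (21 + 7 * t) * x - (3 + t/2).

Lemma F3_factor t x : F (1 + t) (F (1 + t) (F (1 + t) x)) - x + x * ((1 + t) * x - (1 + t) + 1) * (cpol t x)^2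
  = (t^2 - 8) * ((3/4)*x*t - (3/4)*x^2 - (63/4)*x^2*t - 6*x^2*t^2 - x^2*t^3 + 15*x^3 + (213/2)*x^3*t + 58*x^3*t^2 + 14*x^3*t^3 + 2*x^3*t^4 - (171/2)*x^4 - (749/2)*x^4*t - 235*x^4*t^2 - 66*x^4*t^3 - 13*x^4*t^4 - x^4*t^5 + 238*x^5 + (3039/4)*x^5*t + 502*x^5*t^2 + 152*x^5*t^3 + 34*x^5*t^4 + 4*x^5*t^5 - (1403/4)*x^6 - (3571/4)*x^6*t - 592*x^6*t^2 - 186*x^6*t^3 - 44*x^6*t^4 - 6*x^6*t^5 + 262*x^7 + 562*x^7*t + 364*x^7*t^2 + 116*x^7*t^3 + 28*x^7*t^4 + 4*x^7*t^5 - 78*x^8 - 146*x^8*t - 91*x^8*t^2 - 29*x^8*t^3 - 7*x^8*t^4 - x^8*t^5).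
Proof. unfold F, cpol. field. Qed.

Definition Qe (m1 m2 m3 l : R) : list R :=
  (2*m1*m3*l^2 + 2*m1*m2^2*l^2 + 2*m1^3*m2*l^2) ::
  (- m3*l^3 - m2^2*l^3 - 6*m1^2*m2*l^3 - m1^4*l^3) ::
  (6*m1*m2*l^4 + 4*m1^3*l^4) ::
  (- 2*m2*l^5 - 6*m1^2*l^5) ::
  (4*m1*l^6) ::
  (- l^7) :: nil.

Lemma Y3_id m1 m2 m3 l y :
  let Y1 := m1 * y - l * y^2 in let Y2 := m2 * Y1 - l * Y1^2 in
  m3 * Y2 - l * Y2^2 = m1 * m2 * m3 * y + (- (l * (m2 * m3 + m3 * m1^2 + m1^2 * m2^2))) * y^2 + y^3 * horner (Qe m1 m2 m3 l) y.
Proof. simpl. unfold Qe. simpl horner. ring. Qed.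

Lemma quad3 al be ga x1 x2 x3 : x1 <> x2 -> x1 <> x3 -> x2 <> x3 ->
  al * x1^2 + be * x1 + ga = 0 -> al * x2^2 + be * x2 + ga = 0 -> al * x3^2 + be * x3 + ga = 0 ->
  al = 0 /\ be = 0 /\ ga = 0.
Proof.
  intros H12 H13 H23 E1 E2 E3.
  assert (E12 : (x1 - x2) * (al * (x1 + x2) + be) = 0) by nra.
  assert (E13 : (x1 - x3) * (al * (x1 + x3) + be) = 0) by nra.
  apply Rmult_integral in E12 as [E12|E12]; [exfalso; apply H12; lra|].
  apply Rmult_integral in E13 as [E13|E13]; [exfalso; apply H13; lra|].
  assert (E : al * (x2 - x3) = 0) by nra.
  apply Rmult_integral in E as [E|E]; [|exfalso; apply H23; lra].
  subst al. split; [auto|]. assert (be = 0) by lra. subst be. split; auto. lra.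
Qed.

Lemma sqrt8_bounds : 2.828 < sqrt 8 < 2.829 /\ sqrt 8 * sqrt 8 = 8.
Proof.
  assert (H : sqrt 8 * sqrt 8 = 8) by (apply sqrt_sqrt; lra).
  pose proof (sqrt_pos 8). split; [|auto]. split; nra.
Qed.

Lemma sgn_ppn x y z : 0 < x -> 0 < y -> z < 0 -> x * y * z < 0.
Proof. intros. assert (0 < x * y) by (apply Rmult_lt_0_compat; auto). nra. Qed.
Lemma sgn_pnn x y z : 0 < x -> y < 0 -> z < 0 -> 0 < x * y * z.
Proof. intros. assert (x * y < 0) by nra. nra. Qed.
Lemma sgn_nnn x y z : x < 0 -> y < 0 -> z < 0 -> x * y * z < 0.
Proof. intros. assert (0 < x * y) by nra. nra. Qed.
Lemma sgn_ppp x y z : 0 < x -> 0 < y -> 0 < z -> 0 < x * y * z.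
Proof. intros. assert (0 < x * y) by (apply Rmult_lt_0_compat; auto). nra. Qed.
Lemma sgn_pzn x y z : 0 < x -> 0 <= y -> z < 0 -> x * y * z <= 0.
Proof. intros. assert (0 <= x * y) by nra. nra. Qed.
Lemma sgn_ppz x y z : 0 < x -> 0 < y -> 0 <= z -> 0 <= x * y * z.
Proof. intros. assert (0 < x * y) by (apply Rmult_lt_0_compat; auto). nra. Qed.
Lemma sgn_znn x y z : x <= 0 -> y < 0 -> z < 0 -> x * y * z <= 0.
Proof. intros. assert (0 < y * z) by nra. replace (x * y * z) with (x * (y * z)) by ring. nra. Qed.

Lemma PEalg a1 a2 a3 : 0 < a1 -> a1 < a2 -> a2 < a3 -> a3 < 1 ->
  F (1 + sqrt 8) a1 = a2 -> F (1 + sqrt 8) a2 = a3 -> F (1 + sqrt 8) a3 = a1 ->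
  (15/100 <= a1 <= 17/100 /\ 1/2 < a2 <= 53/100 /\ 95/100 <= a3 <= 96/100) /\
  ((1 + sqrt 8) * (1 - 2 * a1)) * ((1 + sqrt 8) * (1 - 2 * a2)) * ((1 + sqrt 8) * (1 - 2 * a3)) = 1.
Proof.
  intros H0 H12 H23 H31 F1 F2 F3.
  destruct sqrt8_bounds as [[Ht1 Ht2] Ht].
  set (t := sqrt 8) in *. set (lam := 1 + t) in *.
  assert (Hroot : forall a, 0 < a -> F lam a <> a -> F lam (F lam (F lam a)) = a -> cpol t a = 0).
  { intros a Ha Hfa Hcyc. pose proof (F3_factor t a) as E. fold lam in E. rewrite Hcyc in E.
    replace (t^2) with 8 in E by (simpl; lra).
    replace ((8 - 8) * _) with 0 in E by ring.
    assert (E' : a * (lam * a - lam + 1) * (cpol t a)^2 = 0) by lra.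
    apply Rmult_integral in E' as [E'|E'].
    - apply Rmult_integral in E' as [E'|E']; [lra|].
      exfalso. apply Hfa. unfold F. nra.
    - destruct (Req_dec (cpol t a) 0) as [|Hn]; auto. exfalso. apply (pow_nonzero _ 2 Hn); auto. }
  assert (C1 : cpol t a1 = 0) by (apply Hroot; [lra| rewrite F1; lra| rewrite F1, F2, F3; auto]).
  assert (C2 : cpol t a2 = 0) by (apply Hroot; [lra| rewrite F2; lra| rewrite F2, F3, F1; auto]).
  assert (C3 : cpol t a3 = 0) by (apply Hroot; [lra| rewrite F3; lra| rewrite F3, F1, F2; auto]).
  set (k3 := 25 + 11 * t).
  assert (Hk3 : 0 < k3) by (unfold k3; lra).
  assert (Hfac : forall x, cpol t x = k3 * ((x - a1) * (x - a2) * (x - a3))).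
  { set (al := - (42 + 35/2 * t) + k3 * (a1 + a2 + a3)).
    set (be := (21 + 7 * t) - k3 * (a1 * a2 + a1 * a3 + a2 * a3)).
    set (ga := - (3 + t/2) + k3 * (a1 * a2 * a3)).
    assert (HD : forall x, cpol t x - k3 * ((x - a1) * (x - a2) * (x - a3)) = al * x^2 + be * x + ga).
    { intros x. unfold cpol, al, be, ga, k3. field. }
    destruct (quad3 al be ga a1 a2 a3) as [Ha [Hb Hg]]; try lra.
    - rewrite <- HD, C1. ring.
    - rewrite <- HD, C2. ring.
    - rewrite <- HD, C3. ring.
    - intros x. pose proof (HD x). rewrite Ha, Hb, Hg in H. lra. }
  assert (Pval : forall p v, cpol t p = v -> (p - a1) * (p - a2) * (p - a3) = v / k3).
  { intros p v E. rewrite Hfac in E. rewrite <- E. field. lra. }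
  assert (S015 : (15/100 - a1) * (15/100 - a2) * (15/100 - a3) < 0).
  { rewrite (Pval _ _ eq_refl). apply Rmult_lt_reg_r with k3; auto. field_simplify; [|lra]. unfold cpol. lra. }
  assert (S017 : 0 < (17/100 - a1) * (17/100 - a2) * (17/100 - a3)).
  { rewrite (Pval _ _ eq_refl). apply Rmult_lt_reg_r with k3; auto. field_simplify; [|lra]. unfold cpol. lra. }
  assert (S05 : 0 < (1/2 - a1) * (1/2 - a2) * (1/2 - a3)).
  { rewrite (Pval _ _ eq_refl). apply Rmult_lt_reg_r with k3; auto. field_simplify; [|lra]. unfold cpol. lra. }
  assert (S053 : (53/100 - a1) * (53/100 - a2) * (53/100 - a3) < 0).
  { rewrite (Pval _ _ eq_refl). apply Rmult_lt_reg_r with k3; auto. field_simplify; [|lra]. unfold cpol. lra. }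
  assert (S095 : (95/100 - a1) * (95/100 - a2) * (95/100 - a3) < 0).
  { rewrite (Pval _ _ eq_refl). apply Rmult_lt_reg_r with k3; auto. field_simplify; [|lra]. unfold cpol. lra. }
  assert (S096 : 0 < (96/100 - a1) * (96/100 - a2) * (96/100 - a3)).
  { rewrite (Pval _ _ eq_refl). apply Rmult_lt_reg_r with k3; auto. field_simplify; [|lra]. unfold cpol. lra. }
  assert (B1 : 1/2 < a2).
  { destruct (Rlt_or_le (1/2) a2) as [|Hc]; auto. exfalso.
    assert (a3 > 53/100).
    { destruct (Rlt_or_le (53/100) a3) as [|Hc3]; [lra|].
      pose proof (sgn_ppz (53/100 - a1) (53/100 - a2) (53/100 - a3) ltac:(lra) ltac:(lra) ltac:(lra)). lra. }
    pose proof (sgn_pzn (1/2 - a1) (1/2 - a2) (1/2 - a3) ltac:(lra) ltac:(lra) ltac:(lra)). lra. }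
  assert (B2 : a2 <= 53/100).
  { destruct (Rle_or_lt a2 (53/100)) as [|Hc]; auto. exfalso.
    assert (a1 > 53/100).
    { destruct (Rlt_or_le (53/100) a1) as [|Hc1]; [lra|].
      assert (0 < (53/100 - a2) * (53/100 - a3)) by nra.
      assert (0 <= (53/100 - a1) * ((53/100 - a2) * (53/100 - a3))) by (apply Rmult_le_pos; lra).
      assert ((53 / 100 - a1) * (53 / 100 - a2) * (53 / 100 - a3) = (53/100 - a1) * ((53/100 - a2) * (53/100 - a3))) by ring.
      lra. }
    pose proof (sgn_nnn (1/2 - a1) (1/2 - a2) (1/2 - a3) ltac:(lra) ltac:(lra) ltac:(lra)). lra. }
  assert (B3 : 95/100 <= a3).
  { destruct (Rle_or_lt (95/100) a3) as [|Hc]; auto. exfalso.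
    pose proof (sgn_ppp (95/100 - a1) (95/100 - a2) (95/100 - a3) ltac:(lra) ltac:(lra) ltac:(lra)). lra. }
  assert (B4 : a3 <= 96/100).
  { destruct (Rle_or_lt a3 (96/100)) as [|Hc]; auto. exfalso.
    pose proof (sgn_ppn (96/100 - a1) (96/100 - a2) (96/100 - a3) ltac:(lra) ltac:(lra) ltac:(lra)). lra. }
  assert (B5 : 15/100 <= a1).
  { destruct (Rle_or_lt (15/100) a1) as [|Hc]; auto. exfalso.
    pose proof (sgn_pnn (15/100 - a1) (15/100 - a2) (15/100 - a3) ltac:(lra) ltac:(lra) ltac:(lra)). lra. }
  assert (B6 : a1 <= 17/100).
  { destruct (Rle_or_lt a1 (17/100)) as [|Hc]; auto. exfalso.
    pose proof (sgn_nnn (17/100 - a1) (17/100 - a2) (17/100 - a3) ltac:(lra) ltac:(lra) ltac:(lra)). lra. }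
  split; [repeat split; lra|].
  assert (Hc05 : cpol t (1/2) = 1/8) by (unfold cpol; field).
  pose proof (Pval _ _ Hc05) as Hp.
  assert (Hl3 : lam * lam * lam = k3) by (unfold lam, k3; nra).
  replace (lam * (1 - 2 * a1) * (lam * (1 - 2 * a2)) * (lam * (1 - 2 * a3))) with
    ((lam * lam * lam) * 8 * ((1/2 - a1) * (1/2 - a2) * (1/2 - a3))) by field.
  rewrite Hp, Hl3. field. lra.
Qed.

Lemma PEsigns lam a1 a2 a3 : 3828/1000 < lam < 3829/1000 ->
  15/100 <= a1 <= 17/100 -> 1/2 < a2 <= 53/100 -> 95/100 <= a3 <= 96/100 ->
  0 < lam * (1 - 2 * a1) /\ lam * (1 - 2 * a2) < 0 /\ lam * (1 - 2 * a3) < 0 /\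
  0 < - (lam * ((lam * (1 - 2 * a2)) * (lam * (1 - 2 * a3)) + (lam * (1 - 2 * a3)) * (lam * (1 - 2 * a1))^2
        + (lam * (1 - 2 * a1))^2 * (lam * (1 - 2 * a2))^2)).
Proof.
  intros Hl H1 H2 H3.
  set (b1 := 1 - 2 * a1). set (b2 := 1 - 2 * a2). set (b3 := 1 - 2 * a3).
  assert (Hb1 : 66/100 <= b1 <= 70/100) by (unfold b1; lra).
  assert (Hb2 : -6/100 <= b2 < 0) by (unfold b2; lra).
  assert (Hb3 : -92/100 <= b3 <= -90/100) by (unfold b3; lra).
  split; [nra|]. split; [nra|]. split; [nra|].
  assert (E1 : b2 * b3 <= 6/100 * (92/100)) by nra.
  assert (Eb1 : 4356/10000 <= b1^2 <= 49/100) by (simpl; nra).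
  assert (Eb2 : b2^2 <= 36/10000) by (simpl; nra).
  assert (E2 : b3 * b1^2 <= - (90/100) * (4356/10000)) by nra.
  assert (E3 : lam * (b3 * b1^2) <= 3828/1000 * (- (90/100) * (4356/10000))) by nra.
  assert (Hl2 : lam^2 <= 1467/100) by (simpl; nra).
  assert (E4 : lam^2 * (b1^2 * b2^2) <= 1467/100 * (49/100 * (36/10000))).
  { apply Rmult_le_compat; try nra. }
  assert (Hinner : b2 * b3 + lam * (b3 * b1^2) + lam^2 * (b1^2 * b2^2) < 0) by lra.
  replace (- (lam * (lam * b2 * (lam * b3) + lam * b3 * (lam * b1) ^ 2 + (lam * b1) ^ 2 * (lam * b2) ^ 2)))
    with (- (lam^3) * (b2 * b3 + lam * (b3 * b1^2) + lam^2 * (b1^2 * b2^2))) by ring.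
  assert (0 < lam^3) by (apply pow_lt; lra). nra.
Qed.

Lemma closer x a b g : Rabs (x - a) <= g / 2 -> g <= Rabs (a - b) -> Rabs (x - a) <= Rabs (x - b).
Proof.
  intros H1 H2. pose proof (Rabs_triang (a - x) (x - b)). replace (a - x + (x - b)) with (a - b) in H by ring.
  rewrite (Rabs_minus_sym a x) in H. lra.
Qed.

Lemma dist3_at x a1 a2 a3 a g : (a = a1 \/ a = a2 \/ a = a3) -> Rabs (x - a) <= g / 2 ->
  (forall b, (b = a1 \/ b = a2 \/ b = a3) -> b <> a -> g <= Rabs (a - b)) ->
  dist3 x a1 a2 a3 = Rabs (x - a).
Proof.
  intros Ha Hx Hg. unfold dist3.
  assert (Hc : forall b, (b = a1 \/ b = a2 \/ b = a3) -> Rabs (x - a) <= Rabs (x - b)).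
  { intros b Hb. destruct (Req_dec b a) as [->|Hne]; [lra|]. apply (closer x a b g); auto. }
  pose proof (Hc a1 ltac:(auto)). pose proof (Hc a2 ltac:(auto)). pose proof (Hc a3 ltac:(auto)).
  destruct Ha as [ -> | [ -> | -> ] ]; unfold Rmin; repeat destruct Rle_dec; lra.
Qed.

Lemma step_gen lam a b x mn Mx rho g (dist : R -> R) : 0 < lam -> F lam a = b ->
  mn <= Rabs (lam * (1 - 2 * a)) <= Mx -> 0 < mn ->
  rho <= mn / (2 * lam) -> 2 * Mx * rho <= g / 2 ->
  Rabs (x - a) <= rho ->
  (forall z, Rabs (z - b) <= g / 2 -> dist z = Rabs (z - b)) ->
  mn / 2 * Rabs (x - a) <= dist (F lam x) <= 2 * Mx * Rabs (x - a).
Proof.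
  intros Hl HF Hmu Hmn Hr1 Hr2 Hx Hd.
  pose proof (near_step lam a b (x - a) Hl HF) as Hns. replace (a + (x - a)) with x in Hns by ring.
  assert (Rabs (x - a) <= Rabs (lam * (1 - 2 * a)) / (2 * lam)).
  { apply Rle_trans with (mn / (2 * lam)); [lra|]. unfold Rdiv. apply Rmult_le_compat_r; [|lra].
    left; apply Rinv_0_lt_compat; lra. }
  specialize (Hns H). pose proof (Rabs_pos (x - a)).
  assert (Rabs (F lam x - b) <= g / 2).
  { apply Rle_trans with (2 * Mx * rho); auto. destruct Hns as [_ Hns]. eapply Rle_trans; [apply Hns|].
    assert (Rabs (lam * (1 - 2 * a)) * Rabs (x - a) <= Mx * rho) by (apply Rmult_le_compat; lra). lra. }
  rewrite Hd by auto. destruct Hns as [Hn1 Hn2]. split.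
  + eapply Rle_trans; [|apply Hn1]. apply Rmult_le_compat_r; lra.
  + eapply Rle_trans; [apply Hn2|]. apply Rmult_le_compat_r; lra.
Qed.

Lemma xn_S3 lam x1 n : (1 <= n)%nat -> xn lam x1 (3 + n) = F lam (F lam (F lam (xn lam x1 n))).
Proof. intros Hn. simpl. rewrite !xn_S by lia. reflexivity. Qed.

Lemma PEcore lam a1 a2 a3 : 0 < lam -> a1 < a2 -> a2 < a3 ->
  F lam a1 = a2 -> F lam a2 = a3 -> F lam a3 = a1 ->
  0 < lam * (1 - 2 * a1) -> lam * (1 - 2 * a2) < 0 -> lam * (1 - 2 * a3) < 0 ->
  (lam * (1 - 2 * a1)) * (lam * (1 - 2 * a2)) * (lam * (1 - 2 * a3)) = 1 ->
  0 < - (lam * ((lam * (1 - 2 * a2)) * (lam * (1 - 2 * a3)) + (lam * (1 - 2 * a3)) * (lam * (1 - 2 * a1))^2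
        + (lam * (1 - 2 * a1))^2 * (lam * (1 - 2 * a2))^2)) ->
  exists delta, 0 < delta /\ forall x1,
       (a1 - delta < x1 < a1 \/ a2 - delta < x1 < a2 \/ a3 < x1 < a3 + delta) ->
       asymp_equiv (fun n => dist3 (xn lam x1 n) a1 a2 a3) (fun n => / INR n) /\
       box_dim (Sset lam x1) (1/2) /\ mink_nondegenerate (Sset lam x1).
Proof.
  intros Hl H12 H23 F1 F2 F3 Hm1 Hm2 Hm3 Hprod HD.
  set (m1 := lam * (1 - 2 * a1)) in *. set (m2 := lam * (1 - 2 * a2)) in *.
  set (m3 := lam * (1 - 2 * a3)) in *.
  set (K := - (lam * (m2 * m3 + m3 * m1 ^ 2 + m1 ^ 2 * m2 ^ 2))) in *.
  set (g := Rmin (a2 - a1) (a3 - a2)).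
  assert (Hg : 0 < g /\ g <= a2 - a1 /\ g <= a3 - a2) by (unfold g, Rmin; destruct Rle_dec; lra).
  assert (Hsep : forall a b, (a = a1 \/ a = a2 \/ a = a3) -> (b = a1 \/ b = a2 \/ b = a3) -> b <> a -> g <= Rabs (a - b)).
  { intros a b Ha Hb Hne.
    destruct Ha as [ Ha | [ Ha | Ha ] ]; destruct Hb as [ Hb | [ Hb | Hb ] ]; subst a b; try (exfalso; apply Hne; reflexivity);
    unfold Rabs; destruct Rcase_abs; lra. }
  assert (Hd3 : forall a z, (a = a1 \/ a = a2 \/ a = a3) -> Rabs (z - a) <= g / 2 -> dist3 z a1 a2 a3 = Rabs (z - a)).
  { intros a z Ha Hz. apply (dist3_at z a1 a2 a3 a g Ha Hz). intros b Hb Hne. apply Hsep; auto. }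
  assert (Ha1 : Rabs m1 = m1) by (apply Rabs_right; lra).
  assert (Ha2 : Rabs m2 = - m2) by (apply Rabs_left; lra).
  assert (Ha3 : Rabs m3 = - m3) by (apply Rabs_left; lra).
  set (mn := Rmin m1 (Rmin (- m2) (- m3))). set (Mx := Rmax m1 (Rmax (- m2) (- m3))).
  assert (Hmn : 0 < mn /\ mn <= m1 /\ mn <= - m2 /\ mn <= - m3) by (unfold mn, Rmin; repeat destruct Rle_dec; lra).
  assert (HMx : m1 <= Mx /\ - m2 <= Mx /\ - m3 <= Mx) by (unfold Mx, Rmax; repeat destruct Rle_dec; lra).
  assert (HMx1 : 1 <= Mx).
  { destruct (Rle_or_lt 1 Mx) as [|Hc]; auto. exfalso.
    assert (m1 * (- m2) < 1 * 1) by (apply Rmult_le_0_lt_compat; lra).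
    assert (m1 * (- m2) * (- m3) < 1 * 1) by (apply Rmult_le_0_lt_compat; try lra; nra).
    lra. }
  set (rho := Rmin (mn / (2 * lam)) (g / (4 * Mx))).
  assert (Hrho : 0 < rho /\ rho <= mn / (2 * lam) /\ rho <= g / (4 * Mx)).
  { unfold rho, Rmin. assert (0 < mn / (2 * lam)) by (apply Rdiv_lt_0_compat; lra).
    assert (0 < g / (4 * Mx)) by (apply Rdiv_lt_0_compat; lra). destruct Rle_dec; lra. }
  assert (Hrho2 : 2 * Mx * rho <= g / 2).
  { apply Rle_trans with (2 * Mx * (g / (4 * Mx))). apply Rmult_le_compat_l; lra. right; field; lra. }
  assert (Hrhog : rho <= g / 4).
  { apply Rle_trans with (g / (4 * Mx)); [lra|]. apply (Rmult_le_reg_r (4 * Mx)); [lra|].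
    field_simplify; [|lra]. nra. }
  assert (Hstep : forall x, dist3 x a1 a2 a3 <= rho ->
     mn / 2 * dist3 x a1 a2 a3 <= dist3 (F lam x) a1 a2 a3 <= 2 * Mx * dist3 x a1 a2 a3).
  { intros x Hx.
    assert (Hcase : dist3 x a1 a2 a3 = Rabs (x - a1) \/ dist3 x a1 a2 a3 = Rabs (x - a2) \/ dist3 x a1 a2 a3 = Rabs (x - a3)).
    { unfold dist3, Rmin. repeat destruct Rle_dec; auto. }
    destruct Hcase as [E|[E|E]]; rewrite E in *.
    - apply (step_gen lam a1 a2 x mn Mx rho g (fun z => dist3 z a1 a2 a3)).
      all: try lra. all: try (fold m1; lra). all: try (intros z Hz; apply Hd3; auto). all: auto.
    - apply (step_gen lam a2 a3 x mn Mx rho g (fun z => dist3 z a1 a2 a3)).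
      all: try lra. all: try (fold m2; lra). all: try (intros z Hz; apply Hd3; auto). all: auto.
    - apply (step_gen lam a3 a1 x mn Mx rho g (fun z => dist3 z a1 a2 a3)).
      all: try lra. all: try (fold m3; lra). all: try (intros z Hz; apply Hd3; auto). all: auto. }
  set (h := fun u => a1 - F lam (F lam (F lam (a1 - u)))).
  set (MQ := sumabs (Qe m1 m2 m3 lam)).
  assert (HMQ : 0 <= MQ) by apply sumabs_pos.
  assert (H3step : forall y, F lam (F lam (F lam (a1 + y))) =
     a1 + (m3 * (m2 * (m1 * y - lam * y^2) - lam * (m1 * y - lam * y^2)^2)
           - lam * (m2 * (m1 * y - lam * y^2) - lam * (m1 * y - lam * y^2)^2)^2)).
  { intros y. rewrite (F_shift lam a1 a2 y F1). rewrite (F_shift lam a2 a3 _ F2).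
    rewrite (F_shift lam a3 a1 _ F3). fold m1 m2 m3. reflexivity. }
  assert (Hh : forall u, 0 < u <= 1 -> Rabs (h u - (u - K * u^2)) <= MQ * u^3).
  { intros u Hu.
    assert (Eh : h u - (u - K * u^2) = u^3 * horner (Qe m1 m2 m3 lam) (- u)).
    { unfold h. replace (a1 - u) with (a1 + - u) by ring. rewrite H3step.
      pose proof (Y3_id m1 m2 m3 lam (- u)) as E. cbv zeta in E. rewrite E. fold K.
      rewrite Hprod. ring. }
    rewrite Eh, Rabs_mult. rewrite (Rabs_right (u^3)) by (apply Rle_ge; apply pow_le; lra).
    assert (Rabs (- u) <= 1) by (rewrite Rabs_Ropp, Rabs_right; lra).
    pose proof (horner_bound (Qe m1 m2 m3 lam) (- u) H). fold MQ in H0.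
    assert (0 <= u^3) by (apply pow_le; lra). rewrite Rmult_comm. apply Rmult_le_compat_r; auto. }
  destruct (nf1 h K MQ 1 HD HMQ ltac:(lra) Hh) as [r0 [Hr0 Hnf]].
  set (L2 := 2 * Mx).
  assert (HL2 : 2 <= L2) by (unfold L2; lra).
  assert (HL22 : 1 <= L2^2) by (apply pow_R1_Rle; lra).
  assert (HL24 : L2^2 <= L2^4) by (apply Rle_pow; lra || lia).
  set (delta := Rmin r0 rho / L2^4).
  assert (Hmr : 0 < Rmin r0 rho /\ Rmin r0 rho <= r0 /\ Rmin r0 rho <= rho) by (unfold Rmin; destruct Rle_dec; lra).
  assert (HL4p : 0 < L2^4) by lra.
  assert (Hdel : 0 < delta) by (unfold delta; apply Rdiv_lt_0_compat; lra).
  assert (HdL4 : L2^4 * delta = Rmin r0 rho) by (unfold delta; field; lra).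
  assert (HdL2 : L2^2 * delta <= Rmin r0 rho) by nra.
  assert (Hdd : delta <= L2^2 * delta) by nra.
  assert (HdL1 : L2 * delta <= L2^2 * delta).
  { assert (L2 <= L2^2) by (simpl; nra). nra. }
  assert (Hdg : L2^2 * delta <= g / 2) by (pose proof (Rmin_r r0 rho); lra).
  assert (Hcommon : forall x1 n0, (1 <= n0 <= 3)%nat -> 0 < a1 - xn lam x1 n0 <= L2^2 * delta ->
     (forall n, (1 <= n <= n0)%nat -> 0 < dist3 (xn lam x1 n) a1 a2 a3 <= L2^2 * delta) ->
     asymp_equiv (fun n => dist3 (xn lam x1 n) a1 a2 a3) (fun n => / INR n) /\
     box_dim (Sset lam x1) (1/2) /\ mink_nondegenerate (Sset lam x1)).
  { intros x1 n0 Hn0 Hw0 Hinit.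
    set (w := fun k => a1 - xn lam x1 (n0 + 3 * k)).
    assert (Hxw : forall k, xn lam x1 (n0 + 3 * k) = a1 - w k) by (intros k; unfold w; ring).
    assert (Hrec : forall k, w (S k) = h (w k)).
    { intros k. unfold h. unfold w at 1. replace (n0 + 3 * S k)%nat with (3 + (n0 + 3 * k))%nat by lia.
      rewrite xn_S3 by lia. rewrite Hxw. reflexivity. }
    assert (Hw00 : 0 < w 0%nat <= r0) by (unfold w; rewrite Nat.add_0_r; lra).
    assert (Hw0' : w 0%nat <= L2^2 * delta) by (unfold w; rewrite Nat.add_0_r; lra).
    pose proof (Hnf w Hw00 Hrec) as Hn.
    assert (Hmono : forall k, w k <= w 0%nat).
    { intros k. induction k as [|k IH]; [lra|]. destruct (Hn k) as [[Hp _] [Hg' _]].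
      assert (0 <= K / 2 * (w k)^2) by (apply Rmult_le_pos; [lra|apply pow_le; lra]). lra. }
    set (d := fun n => dist3 (xn lam x1 n) a1 a2 a3).
    assert (Hd1 : forall k, d (n0 + 3 * k)%nat = w k).
    { intros k. unfold d. destruct (Hn k) as [[Hp _] _]. pose proof (Hmono k).
      rewrite Hxw. rewrite (Hd3 a1) by (auto; replace (a1 - w k - a1) with (- w k) by ring;
        rewrite Rabs_Ropp, Rabs_right; lra).
      replace (a1 - w k - a1) with (- w k) by ring. rewrite Rabs_Ropp, Rabs_right; lra. }
    assert (Hblock : forall k j, (j <= 2)%nat -> d (n0 + 3 * k + j)%nat <= L2^j * w k).
    { intros k j. induction j as [|j IH]; intros Hj.
      - rewrite Nat.add_0_r, Hd1. simpl. lra.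
      - specialize (IH ltac:(lia)). destruct (Hn k) as [[Hp Hle] _]. pose proof (Hmono k).
        assert (L2^j <= L2^2) by (apply Rle_pow; lra || lia).
        assert (Hsm : d (n0 + 3 * k + j)%nat <= rho).
        { apply Rle_trans with (L2^j * w k); auto. apply Rle_trans with (L2^2 * (L2^2 * delta)).
          apply Rmult_le_compat; try lra. apply pow_le; lra. nra. }
        replace (n0 + 3 * k + S j)%nat with (S (n0 + 3 * k + j)) by lia.
        set (m := (n0 + 3 * k + j)%nat) in *.
        assert (E : d (S m) = dist3 (F lam (xn lam x1 m)) a1 a2 a3) by (unfold d; rewrite xn_S by (unfold m; lia); auto).
        rewrite E. destruct (Hstep _ Hsm) as [_ Hs2]. fold L2 in Hs2.
        change (dist3 (xn lam x1 m) a1 a2 a3) with (d m) in Hs2.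
        eapply Rle_trans; [apply Hs2|]. simpl.
        rewrite Rmult_assoc. apply Rmult_le_compat_l; lra. }
    assert (Hsmall : forall n, (1 <= n)%nat -> d n <= rho).
    { intros n Hn1. destruct (Nat.le_gt_cases n n0) as [Hle|Hgt].
      - destruct (Hinit n ltac:(lia)) as [_ H2]. unfold d. lra.
      - set (k := ((n - n0) / 3)%nat). set (j := ((n - n0) mod 3)%nat).
        assert (Hdm : (n - n0 = 3 * k + j)%nat) by (unfold k, j; apply Nat.div_mod; lia).
        assert (Hj : (j < 3)%nat) by (unfold j; apply Nat.mod_upper_bound; lia).
        replace n with (n0 + 3 * k + j)%nat by lia.
        eapply Rle_trans; [apply Hblock; lia|]. destruct (Hn k) as [[Hp Hle] _]. pose proof (Hmono k).
        assert (L2^j <= L2^2) by (apply Rle_pow; lra || lia).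
        apply Rle_trans with (L2^2 * (L2^2 * delta)); [|nra].
        apply Rmult_le_compat; try lra. apply pow_le; lra. }
    assert (Hcmp : forall n, (1 <= n)%nat -> mn / 2 * d n <= d (S n) <= 2 * Mx * d n).
    { intros n Hn1. unfold d. rewrite xn_S by auto. apply Hstep. apply Hsmall; auto. }
    assert (Hpos : forall n, (1 <= n)%nat -> 0 < d n).
    { intros n Hn1. induction n as [|n IH]; [lia|].
      destruct (Nat.le_gt_cases (S n) n0) as [Hle|Hgt].
      - destruct (Hinit (S n) ltac:(lia)) as [H1 _]. unfold d. lra.
      - specialize (IH ltac:(lia)). pose proof (Hcmp n ltac:(lia)). nra. }
    apply (finish1 lam x1 (a1 :: a2 :: a3 :: nil) d n0 3 (/ w 0%nat) (K / 2) (3 * K) (mn / 2) (2 * Mx) w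
      (fun k => xn lam x1 (n0 + 3 * k)) (-1) (K / 2)); auto; try lra.
    - lia.
    - apply Rinv_0_lt_compat. lra.
    - intros n Hn1. unfold d, dist3, Rmin. repeat destruct Rle_dec.
      all: try (exists a1; split; [left; auto|lra]).
      all: try (exists a2; split; [right; left; auto|lra]).
      all: try (exists a3; split; [right; right; left; auto|lra]).
    - intros k. destruct (Hn k) as [_ [_ ?]]. auto.
    - intros k. exists (n0 + 3 * k)%nat. split; [lia|reflexivity].
    - intros k. rewrite !Hxw. destruct (Hn k) as [_ [Hg'' _]]. lra. }
  exists delta. split; auto. intros x1 Hx1.
  assert (Hx1e : xn lam x1 1 = x1) by reflexivity.
  assert (Hx2e : xn lam x1 2 = F lam x1) by (rewrite (xn_S lam x1 1) by lia; reflexivity).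
  assert (Hx3e : xn lam x1 3 = F lam (xn lam x1 2)) by (rewrite (xn_S lam x1 2) by lia; reflexivity).
  destruct Hx1 as [Hx|[Hx|Hx]].
  - apply (Hcommon x1 1%nat); [lia| rewrite Hx1e; lra|].
    intros n Hn. replace n with 1%nat by lia. rewrite Hx1e.
    rewrite (Hd3 a1) by (auto; rewrite Rabs_left; lra). rewrite Rabs_left; lra.
  - set (y := x1 - a2).
    assert (Hy : - delta < y < 0) by (unfold y; lra).
    assert (Ex2 : F lam x1 = a3 + (m2 * y - lam * y^2)).
    { replace x1 with (a2 + y) by (unfold y; ring). rewrite (F_shift lam a2 a3 y F2). fold m2. reflexivity. }
    set (z := m2 * y - lam * y^2).
    assert (Hly : lam * (- y) <= - m2 / 2).
    { assert (- y <= mn / (2 * lam)) by lra. apply (Rmult_le_compat_l lam) in H; [|lra].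
      replace (lam * (mn / (2 * lam))) with (mn / 2) in H by (field; lra). lra. }
    assert (Hz : 0 < z <= L2 * delta).
    { unfold z. split; [nra|]. unfold L2.
      assert (m2 * y - lam * y^2 = (- y) * (- m2 - lam * (- y))) by ring. rewrite H.
      assert (0 <= lam * (- y)) by (apply Rmult_le_pos; lra).
      assert (- m2 - lam * (- y) <= 2 * Mx) by lra.
      assert (0 <= - m2 - lam * (- y)) by lra. nra. }
    assert (Ex3 : F lam (xn lam x1 2) = a1 + (m3 * z - lam * z^2)).
    { rewrite Hx2e, Ex2. fold z. rewrite (F_shift lam a3 a1 z F3). fold m3. reflexivity. }
    assert (Hlz : lam * z <= - m3 / 2).
    { assert (z <= mn / (2 * lam)) by lra. apply (Rmult_le_compat_l lam) in H; [|lra].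
      replace (lam * (mn / (2 * lam))) with (mn / 2) in H by (field; lra). lra. }
    assert (Hw : 0 < - (m3 * z - lam * z^2) <= L2^2 * delta).
    { split; [nra|].
      assert (- (m3 * z - lam * z^2) = z * (- m3 + lam * z)) by ring. rewrite H.
      assert (0 <= lam * z) by (apply Rmult_le_pos; lra).
      assert (- m3 + lam * z <= L2) by (unfold L2; lra).
      assert (z * (- m3 + lam * z) <= (L2 * delta) * L2) by (apply Rmult_le_compat; lra).
      simpl. lra. }
    apply (Hcommon x1 3%nat); [lia| rewrite Hx3e, Ex3; lra|].
    intros n Hn. assert (n = 1 \/ n = 2 \/ n = 3)%nat as [-> | [-> | ->]] by lia.
    + rewrite Hx1e. rewrite (Hd3 a2) by (auto; fold y; rewrite Rabs_left; lra). fold y. rewrite Rabs_left; lra.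
    + rewrite Hx2e, Ex2. fold z. replace (a3 + z - a3) with z by ring.
      rewrite (Hd3 a3) by (auto; replace (a3 + z - a3) with z by ring; rewrite Rabs_right; lra).
      replace (a3 + z - a3) with z by ring. rewrite Rabs_right; lra.
    + rewrite Hx3e, Ex3.
      rewrite (Hd3 a1) by (auto; replace (a1 + (m3 * z - lam * z ^ 2) - a1) with (m3 * z - lam * z ^ 2) by ring;
        rewrite Rabs_left; lra).
      replace (a1 + (m3 * z - lam * z ^ 2) - a1) with (m3 * z - lam * z ^ 2) by ring. rewrite Rabs_left; lra.
  - set (y := x1 - a3).
    assert (Hy : 0 < y < delta) by (unfold y; lra).
    assert (Ex2 : F lam x1 = a1 + (m3 * y - lam * y^2)).
    { replace x1 with (a3 + y) by (unfold y; ring). rewrite (F_shift lam a3 a1 y F3). fold m3. reflexivity. }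
    assert (Hly : lam * y <= - m3 / 2).
    { assert (y <= mn / (2 * lam)) by lra. apply (Rmult_le_compat_l lam) in H; [|lra].
      replace (lam * (mn / (2 * lam))) with (mn / 2) in H by (field; lra). lra. }
    assert (Hw : 0 < - (m3 * y - lam * y^2) <= L2 * delta).
    { split; [nra|].
      assert (- (m3 * y - lam * y^2) = y * (- m3 + lam * y)) by ring. rewrite H.
      assert (0 <= lam * y) by (apply Rmult_le_pos; lra).
      assert (- m3 + lam * y <= L2) by (unfold L2; lra).
      assert (y * (- m3 + lam * y) <= delta * L2) by (apply Rmult_le_compat; lra). lra. }
    apply (Hcommon x1 2%nat); [lia| rewrite Hx2e, Ex2; lra|].
    intros n Hn. assert (n = 1 \/ n = 2)%nat as [-> | ->] by lia.
    + rewrite Hx1e. rewrite (Hd3 a3) by (auto; fold y; rewrite Rabs_right; lra). fold y. rewrite Rabs_right; lra.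
    + rewrite Hx2e, Ex2.
      rewrite (Hd3 a1) by (auto; replace (a1 + (m3 * y - lam * y ^ 2) - a1) with (m3 * y - lam * y ^ 2) by ring;
        rewrite Rabs_left; lra).
      replace (a1 + (m3 * y - lam * y ^ 2) - a1) with (m3 * y - lam * y ^ 2) by ring. rewrite Rabs_left; lra.
Qed.

Lemma partE : forall a1 a2 a3, 0 < a1 -> a1 < a2 -> a2 < a3 -> a3 < 1 ->
     F (1 + sqrt 8) a1 = a2 -> F (1 + sqrt 8) a2 = a3 -> F (1 + sqrt 8) a3 = a1 ->
     exists delta, 0 < delta /\ forall x1,
       (a1 - delta < x1 < a1 \/ a2 - delta < x1 < a2 \/ a3 < x1 < a3 + delta) ->
       asymp_equiv (fun n => dist3 (xn (1 + sqrt 8) x1 n) a1 a2 a3)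
                   (fun n => / INR n) /\
       box_dim (Sset (1 + sqrt 8) x1) (1/2) /\
       mink_nondegenerate (Sset (1 + sqrt 8) x1).
Proof.
  intros a1 a2 a3 H0 H12 H23 H31 F1 F2 F3.
  destruct (PEalg a1 a2 a3 H0 H12 H23 H31 F1 F2 F3) as [[B1 [B2 B3]] Hprod].
  destruct sqrt8_bounds as [[Ht1 Ht2] _].
  destruct (PEsigns (1 + sqrt 8) a1 a2 a3 ltac:(lra) B1 B2 B3) as [Hm1 [Hm2 [Hm3 HD]]].
  apply PEcore; auto. lra.
Qed.

Theorem corollary1 :
  (* (a) *)
  (exists delta, 0 < delta /\ forall x1, 0 < x1 < delta ->
     asymp_equiv (xn 1 x1) (fun n => / INR n) /\
     box_dim (Sset 1 x1) (1/2) /\ mink_nondegenerate (Sset 1 x1)) /\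
  (* (b) *)
  (exists delta, 0 < delta /\ forall x1, 0 < Rabs (x1 - 2/3) < delta ->
     asymp_equiv (fun n => Rabs (xn 3 x1 n - 2/3)) (fun n => Rpower (INR n) (-1/2)) /\
     box_dim (Sset 3 x1) (2/3) /\ mink_nondegenerate (Sset 3 x1)) /\
  (* (c) *)
  (forall lam x1, 0 < lam <= 4 -> lam <> 1 -> lam <> 3 -> 0 < x1 < 1 ->
     (exists l, Un_cv (xn lam x1) l) ->
     box_dim (Sset lam x1) 0) /\
  (* (d) *)
  (forall a1 a2, a1 <> a2 ->
     F (1 + sqrt 6) a1 = a2 -> F (1 + sqrt 6) a2 = a1 ->
     exists delta, 0 < delta /\ forall x1, x1 <> a1 -> x1 <> a2 ->
       dist2 x1 a1 a2 < delta ->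
       asymp_equiv (fun n => dist2 (xn (1 + sqrt 6) x1 n) a1 a2)
                   (fun n => Rpower (INR n) (-1/2)) /\
       box_dim (Sset (1 + sqrt 6) x1) (2/3) /\
       mink_nondegenerate (Sset (1 + sqrt 6) x1)) /\
  (* (e) *)
  (forall a1 a2 a3, 0 < a1 -> a1 < a2 -> a2 < a3 -> a3 < 1 ->
     F (1 + sqrt 8) a1 = a2 -> F (1 + sqrt 8) a2 = a3 -> F (1 + sqrt 8) a3 = a1 ->
     exists delta, 0 < delta /\ forall x1,
       (a1 - delta < x1 < a1 \/ a2 - delta < x1 < a2 \/ a3 < x1 < a3 + delta) ->
       asymp_equiv (fun n => dist3 (xn (1 + sqrt 8) x1 n) a1 a2 a3)
                   (fun n => / INR n) /\
       box_dim (Sset (1 + sqrt 8) x1) (1/2) /\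
       mink_nondegenerate (Sset (1 + sqrt 8) x1)).
Proof.
  split; [exact partA|]. split; [exact partB|]. split; [exact partC|]. split; [exact partD|]. exact partE.
Qed.
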